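(* Let $\Delta$ be a triangle, $v$ a vertex, and $(\xi_m)_{m\ge0}$ the associated sequence of partitions of the angular interval $I$ at $v$. Let $n\ge0$, $c\ge1$ be integers, let $J$ be an interval of the partition $\xi_n$, and let $S$ be the set of cutting points of $\xi_{n+c}$ lying in the interior of $J$. If $|S|\ge 4+2c$, then there exist three points $x_p,x_q,x_r\in S$ which are in good position.
   Context: Let $\Delta$ be a triangle and $v$ a vertex of $\Delta$. Identify the set of directions (rays) emanating from $v$ into $\Delta$ with an interval $I$ via angular coordinate. A generalized diagonal is a billiard orbit segment from a vertex to a vertex; its length is its number of reflections. A direction $x\in I$ whose billiard trajectory from $v$ is a generalized diagonal (reaches a vertex) is assigned an index, namely the length of that generalized diagonal; we write $x_p$ for such a point of index $p$. The partition $\xi_m$ of $I$ is the partition into subintervals whose cutting points are exactly the directions of index at most $m$ (so $\xi_0$ is essentially the trivial partition, and $\xi_{m+1}$ refines $\xi_m$ with at most one new cutting point inside each interval of $\xi_m$). Three cutting points $x_p,x_q,x_r$ with indices $p<q<r$ are in good position if (1) $x_r$ lies strictly between $x_p$ and $x_q$, and (2) the open interval bounded by $x_p$ and $x_q$ contains no cutting point of index $\le r$ other than $x_r$. *)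

(* Defs.v *)
From Stdlib Require Import Reals List.
Open Scope R_scope.

Definition pt := (R * R)%type.

Definition padd (P Q : pt) : pt := (fst P + fst Q, snd P + snd Q).
Definition psub (P Q : pt) : pt := (fst P - fst Q, snd P - snd Q).
Definition pscale (k : R) (P : pt) : pt := (k * fst P, k * snd P).
Definition dot (P Q : pt) : R := fst P * fst Q + snd P * snd Q.
Definition cross (P Q : pt) : R := fst P * snd Q - snd P * fst Q.
Definition pnorm (P : pt) : R := sqrt (dot P P).
Definition rot90 (P : pt) : pt := (- snd P, fst P).

Definition nondeg (A B C : pt) : Prop := cross (psub B A) (psub C A) <> 0.

Definition in_tri (A B C P : pt) : Prop :=
  exists a b c, 0 <= a /\ 0 <= b /\ 0 <= c /\ a + b + c = 1 /\
    P = padd (pscale a A) (padd (pscale b B) (pscale c C)).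

Definition is_vertex (A B C Q : pt) : Prop := Q = A \/ Q = B \/ Q = C.

Definition on_seg (V1 V2 Q : pt) : Prop :=
  exists t, 0 <= t <= 1 /\ Q = padd V1 (pscale t (psub V2 V1)).

Definition reflect (w d : pt) : pt :=
  psub (pscale (2 * dot d w / dot w w) w) d.

Definition exit_pt (A B C P d Q : pt) : Prop :=
  exists t, 0 < t /\ Q = padd P (pscale t d) /\ in_tri A B C Q /\
    forall s, t < s -> ~ in_tri A B C (padd P (pscale s d)).

Definition bounce (A B C Q d d' : pt) : Prop :=
  (on_seg A B Q /\ d' = reflect (psub B A) d) \/
  (on_seg B C Q /\ d' = reflect (psub C B) d) \/
  (on_seg C A Q /\ d' = reflect (psub A C) d).

(** Angular coordinate at the vertex v = A: theta = 0 is the direction of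
    side AB, theta increases towards side AC. *)
Definition orient (A B C : pt) : R :=
  if Rlt_dec 0 (cross (psub B A) (psub C A)) then 1 else -1.
Definition e1 (A B : pt) : pt := pscale (/ pnorm (psub B A)) (psub B A).
Definition dir (A B C : pt) (theta : R) : pt :=
  padd (pscale (cos theta) (e1 A B))
       (pscale (sin theta * orient A B C) (rot90 (e1 A B))).

(** The interval I of directions from A into the triangle (= [0, angle at A]). *)
Definition in_I (A B C : pt) (theta : R) : Prop :=
  0 <= theta <= PI /\ 0 <= orient A B C * cross (dir A B C theta) (psub C A).

(** The direction theta has index p: the billiard trajectory from A in
    direction theta reaches a vertex after exactly p reflections
    (P k = k-th point of the trajectory, D k = direction leaving P k). *)
Definition has_index (A B C : pt) (theta : R) (p : nat) : Prop :=
  in_I A B C theta /\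
  exists (P D : nat -> pt),
    P 0%nat = A /\ D 0%nat = dir A B C theta /\
    (forall k, (k <= p)%nat -> exit_pt A B C (P k) (D k) (P (S k))) /\
    (forall k, (1 <= k <= p)%nat ->
        ~ is_vertex A B C (P k) /\ bounce A B C (P k) (D (pred k)) (D k)) /\
    is_vertex A B C (P (S p)).

(** Cutting points of the partition xi_m: directions of index at most m. *)
Definition cut (A B C : pt) (m : nat) (theta : R) : Prop :=
  exists p, (p <= m)%nat /\ has_index A B C theta p.

Definition partition_interval (A B C : pt) (n : nat) (a b : R) : Prop :=
  cut A B C n a /\ cut A B C n b /\ a < b /\
  forall y, a < y < b -> ~ cut A B C n y.

Definition strictly_between (x z y : R) : Prop :=
  (x < y /\ y < z) \/ (z < y /\ y < x).

Definition good_position (A B C : pt) (xp xq xr : R) (p q r : nat) : Prop :=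
  (p < q < r)%nat /\
  has_index A B C xp p /\ has_index A B C xq q /\ has_index A B C xr r /\
  strictly_between xp xq xr /\
  forall y, strictly_between xp xq y -> cut A B C r y -> y = xr.

(* Main.v *)
Require Import Defs.
From Stdlib Require Import Reals List Lra Lia Psatz Classical ClassicalEpsilon.
Open Scope R_scope.


Inductive V3 := VA | VB | VC.
Definition nx (v : V3) : V3 := match v with VA => VB | VB => VC | VC => VA end.
Definition vert (A B C : pt) (v : V3) : pt :=
  match v with VA => A | VB => B | VC => C end.
Definition Dl (A B C : pt) : R := cross (psub B A) (psub C A).
Definition lam (A B C : pt) (v : V3) (P : pt) : R :=
  cross (psub (vert A B C (nx v)) P) (psub (vert A B C (nx (nx v))) P) / Dl A B C.
Definition dl (A B C : pt) (v : V3) (D : pt) : R :=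
  cross (psub (vert A B C (nx (nx v))) (vert A B C (nx v))) D / Dl A B C.

Ltac dpts := repeat match goal with
  | P : pt |- _ => let a := fresh "a" in let b := fresh "b" in destruct P as [a b]
  end.
Ltac gsimp := unfold lam, dl, Dl, nondeg, padd, psub, pscale, cross, dot, reflect, vert, nx in *; dpts; simpl in *.

Lemma lam_affine A B C v P s D : nondeg A B C ->
  lam A B C v (padd P (pscale s D)) = lam A B C v P + s * dl A B C v D.
Proof. intro H; destruct v; gsimp; field; exact H. Qed.

Lemma lam_sum A B C P : nondeg A B C ->
  lam A B C VA P + lam A B C VB P + lam A B C VC P = 1.
Proof. intro H; gsimp; field; exact H. Qed.

Lemma dl_sum A B C D : nondeg A B C ->
  dl A B C VA D + dl A B C VB D + dl A B C VC D = 0.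
Proof. intro H; gsimp; field; exact H. Qed.

Lemma dl_lin A B C v a D1 b D2 : nondeg A B C ->
  dl A B C v (padd (pscale a D1) (pscale b D2)) = a * dl A B C v D1 + b * dl A B C v D2.
Proof. intro H; destruct v; gsimp; field; exact H. Qed.

Lemma lam_recon A B C P : nondeg A B C ->
  P = padd (pscale (lam A B C VA P) A) (padd (pscale (lam A B C VB P) B) (pscale (lam A B C VC P) C)).
Proof. intro H; gsimp; f_equal; field; exact H. Qed.

Lemma lam_bary A B C a b c : nondeg A B C -> a + b + c = 1 ->
  lam A B C VA (padd (pscale a A) (padd (pscale b B) (pscale c C))) = a /\
  lam A B C VB (padd (pscale a A) (padd (pscale b B) (pscale c C))) = b /\
  lam A B C VC (padd (pscale a A) (padd (pscale b B) (pscale c C))) = c.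
Proof.
  intros H Hs. assert (c = 1 - a - b) by lra. subst c.
  gsimp; repeat split; field; exact H.
Qed.

Lemma in_tri_lam A B C P : nondeg A B C ->
  (in_tri A B C P <-> forall v, 0 <= lam A B C v P).
Proof.
  intro H; split.
  - intros (a & b & c & Ha & Hb & Hc & Hs & ->).
    destruct (lam_bary A B C a b c H Hs) as (E1 & E2 & E3).
    intros []; [rewrite E1|rewrite E2|rewrite E3]; assumption.
  - intro Hl. exists (lam A B C VA P), (lam A B C VB P), (lam A B C VC P).
    repeat split; try apply Hl. apply lam_sum; auto. apply lam_recon; auto.
Qed.

Lemma lam_eq A B C P Q : nondeg A B C ->
  lam A B C VA P = lam A B C VA Q -> lam A B C VB P = lam A B C VB Q ->
  lam A B C VC P = lam A B C VC Q -> P = Q.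
Proof.
  intros H E1 E2 E3. rewrite (lam_recon A B C P H), (lam_recon A B C Q H).
  rewrite E1, E2, E3; reflexivity.
Qed.

Lemma lam_vert A B C u v : nondeg A B C ->
  lam A B C v (vert A B C u) = if (match u, v with VA,VA|VB,VB|VC,VC => true | _,_ => false end) then 1 else 0.
Proof. intro H; destruct u, v; gsimp; field; exact H. Qed.


Lemma lam_sum3 A B C v P : nondeg A B C ->
  lam A B C v P + lam A B C (nx v) P + lam A B C (nx (nx v)) P = 1.
Proof. intro H; pose proof (lam_sum A B C P H); destruct v; simpl; lra. Qed.

Lemma dl_sum3 A B C v D : nondeg A B C ->
  dl A B C v D + dl A B C (nx v) D + dl A B C (nx (nx v)) D = 0.
Proof. intro H; pose proof (dl_sum A B C D H); destruct v; simpl; lra. Qed.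

Lemma lam_seg A B C u V1 V2 t : nondeg A B C ->
  lam A B C u (padd V1 (pscale t (psub V2 V1))) = (1 - t) * lam A B C u V1 + t * lam A B C u V2.
Proof. intro H; destruct u; gsimp; field; exact H. Qed.

Definition vb (u v : V3) : R := match u, v with VA,VA|VB,VB|VC,VC => 1 | _,_ => 0 end.

Lemma lam_vert' A B C u v : nondeg A B C -> lam A B C v (vert A B C u) = vb u v.
Proof. intro H; destruct u, v; gsimp; field; exact H. Qed.

Lemma all_v (P : V3 -> Prop) : P VA -> P VB -> P VC -> forall v, P v.
Proof. intros; destruct v; auto. Qed.

Lemma lam_eq_all A B C P Q : nondeg A B C -> (forall v, lam A B C v P = lam A B C v Q) -> P = Q.
Proof. intros H E; apply (lam_eq A B C); auto. Qed.

Lemma onseg_lam A B C v Q : nondeg A B C ->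
  on_seg (vert A B C (nx v)) (vert A B C (nx (nx v))) Q ->
  in_tri A B C Q /\ lam A B C v Q = 0 /\
  lam A B C (nx v) Q + lam A B C (nx (nx v)) Q = 1.
Proof.
  intros H (t & Ht & ->). rewrite (in_tri_lam A B C _ H).
  repeat split.
  - intro u; rewrite lam_seg by auto; rewrite !lam_vert' by auto.
    destruct u, v; simpl; nra.
  - rewrite lam_seg by auto; rewrite !lam_vert' by auto. destruct v; simpl; ring.
  - rewrite !lam_seg by auto; rewrite !lam_vert' by auto. destruct v; simpl; ring.
Qed.

Lemma lam_onseg A B C v Q : nondeg A B C -> in_tri A B C Q -> lam A B C v Q = 0 ->
  on_seg (vert A B C (nx v)) (vert A B C (nx (nx v))) Q.
Proof.
  intros H Hi H0. rewrite (in_tri_lam A B C _ H) in Hi.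
  pose proof (lam_sum3 A B C v Q H) as Hs.
  exists (lam A B C (nx (nx v)) Q). split.
  - pose proof (Hi (nx v)); pose proof (Hi (nx (nx v))); lra.
  - apply (lam_eq_all A B C); auto. intro u. rewrite lam_seg by auto; rewrite !lam_vert' by auto.
    destruct v, u; simpl in *; lra.
Qed.

Lemma vertex_iff A B C Q : is_vertex A B C Q <-> exists u, Q = vert A B C u.
Proof.
  split.
  - intros [E|[E|E]]; rewrite E; [exists VA|exists VB|exists VC]; reflexivity.
  - intros [u ->]; destruct u; simpl; unfold is_vertex; auto.
Qed.

Lemma nonvertex_pos A B C v Q : nondeg A B C -> in_tri A B C Q -> lam A B C v Q = 0 ->
  ~ is_vertex A B C Q -> 0 < lam A B C (nx v) Q /\ 0 < lam A B C (nx (nx v)) Q.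
Proof.
  intros H Hi H0 Hnv. rewrite (in_tri_lam A B C _ H) in Hi.
  pose proof (lam_sum3 A B C v Q H) as Hs.
  pose proof (Hi (nx v)); pose proof (Hi (nx (nx v))).
  split; apply Rnot_le_lt; intro Hle; apply Hnv; apply vertex_iff.
  - exists (nx (nx v)). apply (lam_eq_all A B C); auto. intro u; rewrite lam_vert' by auto.
    destruct v, u; simpl in *; lra.
  - exists (nx v). apply (lam_eq_all A B C); auto. intro u; rewrite lam_vert' by auto.
    destruct v, u; simpl in *; lra.
Qed.

Lemma pos_nonvertex A B C v Q : nondeg A B C -> lam A B C v Q = 0 ->
  0 < lam A B C (nx v) Q -> 0 < lam A B C (nx (nx v)) Q -> ~ is_vertex A B C Q.
Proof.
  intros H H0 H1 H2 Hv. apply vertex_iff in Hv as [u ->].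
  rewrite !lam_vert' in * by auto. destruct u, v; simpl in *; lra.
Qed.


Lemma padd_scale_comb P t e D :
  padd P (pscale (t + e) D) = padd (padd P (pscale t D)) (pscale e D).
Proof. dpts; unfold padd, pscale; simpl; f_equal; ring. Qed.

Lemma exit_strict A B C P D Q v : nondeg A B C -> exit_pt A B C P D Q ->
  lam A B C v Q = 0 -> 0 < lam A B C (nx v) Q -> 0 < lam A B C (nx (nx v)) Q ->
  dl A B C v D < 0.
Proof.
  intros H (t & Ht & EQ & HQ & Hout) H0 H1 H2.
  apply Rnot_le_lt; intro Hd.
  set (d1 := dl A B C (nx v) D). set (d2 := dl A B C (nx (nx v)) D).
  set (l1 := lam A B C (nx v) Q) in *. set (l2 := lam A B C (nx (nx v)) Q) in *.
  set (e := Rmin (l1 / (Rabs d1 + 1)) (l2 / (Rabs d2 + 1))).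
  assert (He1 : e <= l1 / (Rabs d1 + 1)) by apply Rmin_l.
  assert (He2 : e <= l2 / (Rabs d2 + 1)) by apply Rmin_r.
  assert (Hep : 0 < e).
  { unfold e, Rmin; destruct Rle_dec; apply Rdiv_lt_0_compat; auto;
    pose proof (Rabs_pos d1); pose proof (Rabs_pos d2); lra. }
  apply (Hout (t + e)); [lra|].
  rewrite padd_scale_comb, <- EQ.
  apply (in_tri_lam A B C _ H). intro u.
  rewrite lam_affine by auto.
  assert (forall u, u = v \/ u = nx v \/ u = nx (nx v)) as Hu by (destruct v, u0; simpl; auto).
  destruct (Hu u) as [E|[E|E]]; rewrite E.
  - rewrite H0. nra.
  - fold l1 d1. apply Rmult_le_compat_r with (r := Rabs d1 + 1) in He1;
      [|pose proof (Rabs_pos d1); lra].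
    unfold Rdiv in He1; rewrite Rmult_assoc, Rinv_l in He1 by (pose proof (Rabs_pos d1); lra).
    pose proof (Rabs_pos d1). pose proof (Rle_abs (- d1)). rewrite Rabs_Ropp in *. nra.
  - fold l2 d2. apply Rmult_le_compat_r with (r := Rabs d2 + 1) in He2;
      [|pose proof (Rabs_pos d2); lra].
    unfold Rdiv in He2; rewrite Rmult_assoc, Rinv_l in He2 by (pose proof (Rabs_pos d2); lra).
    pose proof (Rabs_pos d2). pose proof (Rle_abs (- d2)). rewrite Rabs_Ropp in *. nra.
Qed.

Lemma exit_data A B C P D Q : exit_pt A B C P D Q ->
  exists t, 0 < t /\ Q = padd P (pscale t D) /\ in_tri A B C Q.
Proof. intros (t & Ht & E & Hi & _); eauto. Qed.

Lemma exit_parallel A B C P D Q v : nondeg A B C -> in_tri A B C P ->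
  lam A B C v P = 0 -> exit_pt A B C P D Q -> lam A B C v Q = 0 -> is_vertex A B C Q.
Proof.
  intros H HP HvP He HvQ.
  destruct (classic (is_vertex A B C Q)) as [|Hnv]; auto. exfalso.
  pose proof He as (t & Ht & EQ & HQ & _).
  destruct (nonvertex_pos A B C v Q H HQ HvQ Hnv).
  pose proof (exit_strict A B C P D Q v H He HvQ H0 H1).
  rewrite EQ, lam_affine in HvQ by auto. nra.
Qed.

Definition wv A B C v := psub (vert A B C (nx (nx v))) (vert A B C (nx v)).
Definition refl_pt A B C v O := padd (vert A B C (nx v)) (reflect (wv A B C v) (psub O (vert A B C (nx v)))).

Lemma bounce_iff A B C Q d d' : bounce A B C Q d d' <->
  exists v, on_seg (vert A B C (nx v)) (vert A B C (nx (nx v))) Q /\ d' = reflect (wv A B C v) d.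
Proof.
  unfold bounce, wv; split.
  - intros [H|[H|H]]; [exists VC|exists VA|exists VB]; exact H.
  - intros [v H]; destruct v; simpl in H; auto.
Qed.

Lemma reflect_lin w a d1 b d2 :
  reflect w (padd (pscale a d1) (pscale b d2)) = padd (pscale a (reflect w d1)) (pscale b (reflect w d2)).
Proof. unfold reflect; dpts; unfold padd, psub, pscale, dot; simpl; f_equal; unfold Rdiv; ring. Qed.

Lemma wv_nz A B C v : nondeg A B C -> dot (wv A B C v) (wv A B C v) <> 0.
Proof.
  intros H E. apply H. unfold wv in E. destruct v; gsimp;
  match type of E with (?x - ?y) * _ + (?z - ?w) * _ = 0 =>
    pose proof (Rle_0_sqr (x-y)); pose proof (Rle_0_sqr (z-w)); unfold Rsqr in *;
    assert (E1 : (x-y)*(x-y) = 0) by lra; assert (E2 : (z-w)*(z-w) = 0) by lra;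
    apply Rmult_integral in E1; apply Rmult_integral in E2;
    assert (x = y) by lra; assert (z = w) by lra end; subst; ring.
Qed.

Lemma reflect_invol w d : dot w w <> 0 -> reflect w (reflect w d) = d.
Proof. intro H. unfold reflect in *; dpts; unfold psub, pscale, dot in *; simpl in *; f_equal; field; auto. Qed.

Lemma reflect_fix w d : dot w w <> 0 -> cross w d = 0 -> reflect w d = d.
Proof.
  destruct w as [a1 b1], d as [a b].
  intros H0 H1. unfold reflect, cross, dot, psub, pscale in *; simpl in *.
  f_equal.
  - assert (X : 2 * (a * a1 + b * b1) / (a1 * a1 + b1 * b1) * a1 - a - a =
                2 * b1 * (a1 * b - b1 * a) / (a1 * a1 + b1 * b1)) by (field; auto).
    rewrite H1 in X. unfold Rdiv in X. lra.
  - assert (X : 2 * (a * a1 + b * b1) / (a1 * a1 + b1 * b1) * b1 - b - b =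
                - 2 * a1 * (a1 * b - b1 * a) / (a1 * a1 + b1 * b1)) by (field; auto).
    rewrite H1 in X. unfold Rdiv in X. lra.
Qed.

Lemma refl_fix A B C v Q : nondeg A B C -> lam A B C v Q = 0 -> refl_pt A B C v Q = Q.
Proof.
  intros H H0. pose proof (wv_nz A B C v H) as Hw. unfold refl_pt.
  rewrite reflect_fix; auto.
  - dpts; unfold padd, psub; simpl; f_equal; ring.
  - unfold lam in H0. unfold Rdiv in H0. apply Rmult_integral in H0 as [H0|H0].
    + unfold wv. revert H0. generalize (vert A B C (nx v)) (vert A B C (nx (nx v))).
      intros V1 V2 E. unfold cross, psub in *; dpts; simpl in *; lra.
    + exfalso. apply Rinv_neq_0_compat in H0; auto.
Qed.


Lemma refl_pt_lin A B C v O a D :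
  refl_pt A B C v (padd O (pscale a D)) = padd (refl_pt A B C v O) (pscale a (reflect (wv A B C v) D)).
Proof.
  unfold refl_pt. generalize (wv A B C v) (vert A B C (nx v)). intros w V.
  unfold reflect; dpts; unfold padd, psub, pscale, dot; simpl; f_equal; unfold Rdiv; ring.
Qed.

Lemma dl_reflect A B C v D : nondeg A B C -> dl A B C v (reflect (wv A B C v) D) = - dl A B C v D.
Proof. intro H. pose proof (wv_nz A B C v H). destruct v; unfold wv in *; gsimp; field; auto. Qed.


Lemma pos_dot_BA A B C : nondeg A B C -> 0 < dot (psub B A) (psub B A).
Proof.
  intro H. unfold nondeg in H. destruct A as [a1 a2], B as [b1 b2], C as [c1 c2].
  unfold dot, cross, psub in *; simpl in *.
  destruct (Req_dec (b1 - a1) 0) as [E1|E1]; [destruct (Req_dec (b2 - a2) 0) as [E2|E2]|].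
  - exfalso; apply H; rewrite E1, E2; ring.
  - pose proof (Rle_0_sqr (b1-a1)); unfold Rsqr in *; nra.
  - pose proof (Rle_0_sqr (b2-a2)); unfold Rsqr in *; nra.
Qed.

Lemma e1_unit A B C : nondeg A B C -> dot (e1 A B) (e1 A B) = 1.
Proof.
  intro H. pose proof (pos_dot_BA A B C H) as Hp.
  unfold e1, pnorm. generalize (psub B A) Hp. intros [p q] Hp'.
  unfold dot, pscale in *; simpl in *.
  pose proof (sqrt_sqrt (p*p+q*q)) as S. pose proof (sqrt_lt_R0 _ Hp') as S2.
  set (s := sqrt (p*p+q*q)) in *.
  transitivity ((p*p+q*q)/(s*s)); [field; lra | rewrite S; [field|]; lra].
Qed.

Lemma orient_sq A B C : orient A B C * orient A B C = 1.
Proof. unfold orient; destruct Rlt_dec; ring. Qed.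

Lemma orient_pos A B C : nondeg A B C -> 0 < orient A B C * Dl A B C.
Proof.
  intro H. unfold orient, Dl, nondeg in *. destruct Rlt_dec; [lra|].
  assert (cross (psub B A) (psub C A) < 0) by (apply Rnot_le_lt; intro; apply H; lra). lra.
Qed.

Lemma dir_comp A B C th : nondeg A B C ->
  dot (dir A B C th) (e1 A B) = cos th /\
  dot (dir A B C th) (rot90 (e1 A B)) = sin th * orient A B C.
Proof.
  intro H. pose proof (e1_unit A B C H) as U. unfold dir in *.
  generalize (e1 A B) U (orient A B C). intros [p q] U' o.
  unfold dot, padd, pscale, rot90 in *; simpl in *. split.
  - transitivity (cos th * (p*p+q*q)); [ring| rewrite U'; ring].
  - transitivity (sin th * o * (p*p+q*q)); [ring| rewrite U'; ring].
Qed.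

Lemma cross_e1 A B C : nondeg A B C ->
  cross (e1 A B) (psub C A) = Dl A B C / pnorm (psub B A).
Proof.
  intro H. unfold e1, Dl. generalize (pnorm (psub B A)). intro n.
  unfold cross, pscale, psub; dpts; simpl. unfold Rdiv. ring.
Qed.

Lemma pnorm_pos A B C : nondeg A B C -> 0 < pnorm (psub B A).
Proof. intro H. unfold pnorm. apply sqrt_lt_R0, (pos_dot_BA A B C H). Qed.

Lemma in_I_lt_PI A B C th : nondeg A B C -> in_I A B C th -> 0 <= th < PI.
Proof.
  intros H [[H0 H1] H2]. split; auto. destruct (Req_dec th PI) as [E|E]; [|lra].
  subst th. exfalso. unfold dir in H2. rewrite cos_PI, sin_PI in H2.
  assert (X : cross (padd (pscale (-1) (e1 A B)) (pscale (0 * orient A B C) (rot90 (e1 A B)))) (psub C A)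
     = - cross (e1 A B) (psub C A)).
  { generalize (e1 A B). intros; unfold cross, padd, pscale, rot90; dpts; simpl; ring. }
  rewrite X, cross_e1 in H2 by auto.
  pose proof (orient_pos A B C H). pose proof (pnorm_pos A B C H).
  assert (0 < orient A B C * (Dl A B C / pnorm (psub B A))).
  { unfold Rdiv. rewrite <- Rmult_assoc. apply Rmult_lt_0_compat; auto. apply Rinv_0_lt_compat; auto. }
  lra.
Qed.

Lemma dir_combo_neq A B C x y a b : nondeg A B C -> in_I A B C x -> in_I A B C y -> x < y ->
  0 < a -> 0 < b -> pscale a (dir A B C x) = pscale b (dir A B C y) -> False.
Proof.
  intros H Hx Hy Hxy Ha Hb E.
  destruct (dir_comp A B C x H) as [Cx Sx]. destruct (dir_comp A B C y H) as [Cy Sy].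
  assert (E1 : a * cos x = b * cos y).
  { rewrite <- Cx, <- Cy. generalize (dir A B C x) (dir A B C y) (e1 A B) E.
    intros P Q R. unfold pscale, dot; dpts; simpl. intro EE; injection EE; intros E5 E6.
    match goal with |- a * (?u * ?c + ?v * ?d) = _ =>
      transitivity ((a*u)*c + (a*v)*d); [ring| rewrite E5, E6; ring] end. }
  assert (E2 : a * (sin x * orient A B C) = b * (sin y * orient A B C)).
  { rewrite <- Sx, <- Sy. generalize (dir A B C x) (dir A B C y) (rot90 (e1 A B)) E.
    intros P Q R. unfold pscale, dot; dpts; simpl. intro EE; injection EE; intros E5 E6.
    match goal with |- a * (?u * ?c + ?v * ?d) = _ =>
      transitivity ((a*u)*c + (a*v)*d); [ring| rewrite E5, E6; ring] end. }
  assert (E3 : a * sin x = b * sin y).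
  { pose proof (orient_sq A B C). transitivity (a * (sin x * orient A B C) * orient A B C).
    rewrite Rmult_assoc, Rmult_assoc, H0; ring. rewrite E2.
    rewrite Rmult_assoc, Rmult_assoc, H0; ring. }
  assert (a * a = b * b).
  { pose proof (sin2_cos2 x) as S1; pose proof (sin2_cos2 y) as S2; unfold Rsqr in *.
    transitivity ((a * sin x) * (a * sin x) + (a * cos x) * (a * cos x)).
    { transitivity (a * a * (sin x * sin x + cos x * cos x)); [rewrite S1; ring|ring]. }
    rewrite E1, E3.
    transitivity (b * b * (sin y * sin y + cos y * cos y)); [ring|rewrite S2; ring]. }
  assert (a = b) by (assert ((a-b)*(a+b) = 0) by (ring_simplify; lra); apply Rmult_integral in H1; lra). subst b.
  apply in_I_lt_PI in Hx; auto. apply in_I_lt_PI in Hy; auto.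
  pose proof (cos_decreasing_1 x y ltac:(lra) ltac:(lra) ltac:(lra) ltac:(lra) Hxy). nra.
Qed.


Lemma sin_pos_gt t : -PI < t <= PI -> 0 < sin t -> 0 < t.
Proof.
  intros [H1 H2] Hs. apply Rnot_le_lt; intro Ht.
  assert (0 <= sin (- t)) by (apply sin_ge_0; lra). rewrite sin_neg in H. lra.
Qed.

Lemma cross_lin k al p be q r :
  cross (pscale k (padd (pscale al p) (pscale be q))) r = k * (al * cross p r + be * cross q r).
Proof. unfold cross, pscale, padd; dpts; simpl; ring. Qed.

Lemma dir_between A B C x y al be : nondeg A B C -> in_I A B C x -> in_I A B C y -> x < y ->
  0 < al -> 0 < be ->
  exists z N, x < z < y /\ in_I A B C z /\ 0 < N /\
    dir A B C z = pscale (/ N) (padd (pscale al (dir A B C x)) (pscale be (dir A B C y))).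
Proof.
  intros H Hx Hy Hxy Ha Hb.
  pose proof (in_I_lt_PI A B C x H Hx) as Bx. pose proof (in_I_lt_PI A B C y H Hy) as By.
  set (c1 := al * cos x + be * cos y). set (s1 := al * sin x + be * sin y).
  assert (Hsx : 0 <= sin x) by (apply sin_ge_0; lra).
  assert (Hsy : 0 < sin y) by (apply sin_gt_0; lra).
  assert (Hs1 : 0 < s1) by (unfold s1; nra).
  set (N := sqrt (c1 * c1 + s1 * s1)).
  assert (HN2 : N * N = c1 * c1 + s1 * s1) by (apply sqrt_sqrt; nra).
  assert (HN : 0 < N) by (apply sqrt_lt_R0; nra).
  assert (Hc : -1 <= c1 / N <= 1).
  { assert (Habs : c1 * c1 <= N * N) by nra.
    split; apply (Rmult_le_reg_r N); auto; unfold Rdiv; rewrite Rmult_assoc, Rinv_l by lra; nra. }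
  set (z := acos (c1 / N)).
  assert (Cz : cos z = c1 / N) by (apply cos_acos; auto).
  assert (Sz : sin z = s1 / N).
  { unfold z; rewrite sin_acos by auto. 
    assert (1 - (c1 / N)² = (s1 / N) * (s1 / N)).
    { unfold Rsqr. transitivity ((N*N - c1*c1)/(N*N)); [field; lra| replace (N*N - c1*c1) with (s1*s1) by lra; field; lra]. }
    rewrite H0. apply sqrt_square. apply Rlt_le, Rdiv_lt_0_compat; auto. }
  pose proof (acos_bound (c1 / N)) as Bz. fold z in Bz.
  assert (Sxy : 0 < sin (y - x)) by (apply sin_gt_0; lra).
  exists z, N. split; [split|split; [|split]].
  - apply Rlt_0_minus, sin_pos_gt; [lra|].
    rewrite sin_minus, Cz, Sz.
    replace (s1 / N * cos x - c1 / N * sin x) with (be * sin (y - x) / N)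
      by (rewrite sin_minus; unfold s1, c1; field; lra).
    apply Rdiv_lt_0_compat; nra.
  - apply Rlt_0_minus, sin_pos_gt; [lra|].
    rewrite sin_minus, Cz, Sz.
    replace (sin y * (c1 / N) - cos y * (s1 / N)) with (al * sin (y - x) / N)
      by (rewrite sin_minus; unfold s1, c1; field; lra).
    apply Rdiv_lt_0_compat; nra.
  - assert (E : dir A B C z = pscale (/ N) (padd (pscale al (dir A B C x)) (pscale be (dir A B C y)))).
    { unfold dir. rewrite Cz, Sz. unfold c1, s1. generalize (e1 A B) (orient A B C).
      intros u o. unfold padd, pscale, rot90; dpts; simpl; f_equal; field; lra. }
    split; [lra|]. rewrite E. destruct Hx as [_ Hx]. destruct Hy as [_ Hy].
    rewrite cross_lin. assert (0 <= / N) by (apply Rlt_le, Rinv_0_lt_compat; auto).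
    replace (orient A B C * (/ N * (al * cross (dir A B C x) (psub C A) + be * cross (dir A B C y) (psub C A))))
      with (/ N * (al * (orient A B C * cross (dir A B C x) (psub C A)) + be * (orient A B C * cross (dir A B C y) (psub C A)))) by ring.
    apply Rmult_le_pos; auto. nra.
  - lra.
  - unfold dir. rewrite Cz, Sz. unfold c1, s1. generalize (e1 A B) (orient A B C).
    intros u o. unfold padd, pscale, rot90; dpts; simpl; f_equal; field; lra.
Qed.


Lemma three_cases (v s s' : V3) : v <> s -> v <> s' -> s <> s' -> forall u, u = v \/ u = s \/ u = s'.
Proof. intros; destruct v, s, s', u; auto; congruence. Qed.

Lemma sum_three A B C v s s' P : nondeg A B C -> v <> s -> v <> s' -> s <> s' ->
  lam A B C v P + lam A B C s P + lam A B C s' P = 1.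
Proof. intros H; pose proof (lam_sum A B C P H); destruct v, s, s'; intros; try congruence; lra. Qed.

Lemma dsum_three A B C v s s' D : nondeg A B C -> v <> s -> v <> s' -> s <> s' ->
  dl A B C v D + dl A B C s D + dl A B C s' D = 0.
Proof. intros H; pose proof (dl_sum A B C D H); destruct v, s, s'; intros; try congruence; lra. Qed.

Lemma solve_lin L d x : d <> 0 -> L + d * x = 0 -> x = - L / d.
Proof. intros Hd E. replace L with (- (d * x)) by lra. field. auto. Qed.

Lemma cone_alg (Lv Ls Ls' dvx dsx ds'x dvy dsy ds'y a' a b' b : R) :
  Lv + Ls + Ls' = 1 -> dvx + dsx + ds'x = 0 -> dvy + dsy + ds'y = 0 ->
  0 < a' < a -> 0 < b' < b ->
  Lv + a' * dvx = 0 -> 0 < Ls + a' * dsx ->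
  Ls + a * dsx = 0 -> 0 < Lv + a * dvx -> 0 < Ls' + a * ds'x ->
  Lv + b' * dvy = 0 -> 0 < Ls' + b' * ds'y ->
  Ls' + b * ds'y = 0 -> 0 < Lv + b * dvy -> 0 < Ls + b * dsy ->
  exists p q, 0 < p /\ 0 < q /\ Ls + p * dsx + q * dsy = 0 /\ Ls' + p * ds'x + q * ds'y = 0 /\
    Lv + p * dvx + q * dvy = 1 /\ a' * b' < p * b' + q * a' /\ 0 < p * dvx + q * dvy.
Proof.
  intros S0 S1 S2 Ha Hb E1 I1 E2 I2 I3 E3 I4 E4 I5 I6.
  set (e := - Lv).
  assert (Hdvx : dvx = e / a') by (unfold e; apply solve_lin; lra).
  assert (Hdvy : dvy = e / b') by (unfold e; apply solve_lin; lra).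
  assert (Hdsx : dsx = - Ls / a) by (apply solve_lin; lra).
  assert (Hds'y : ds'y = - Ls' / b) by (apply solve_lin; lra).
  assert (He : 0 < e).
  { rewrite Hdvx in I2. unfold e in *. 
    assert (0 < - Lv * (a - a') / a') by (replace (-Lv*(a-a')/a') with (Lv + a * (- Lv / a')) by (field; lra); lra).
    apply Rmult_lt_reg_r with ((a - a')/a'). apply Rdiv_lt_0_compat; lra.
    rewrite Rmult_0_l. replace (- Lv * ((a - a') / a')) with (- Lv * (a - a') / a') by (field; lra). lra. }
  assert (HLs : 0 < Ls).
  { rewrite Hdsx in I1. replace (Ls + a' * (- Ls / a)) with (Ls * ((a - a')/a)) in I1 by (field; lra).
    apply (Rmult_lt_reg_r ((a - a')/a)). apply Rdiv_lt_0_compat; lra. lra. }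
  assert (HLs' : 0 < Ls').
  { rewrite Hds'y in I4. replace (Ls' + b' * (- Ls' / b)) with (Ls' * ((b - b')/b)) in I4 by (field; lra).
    apply (Rmult_lt_reg_r ((b - b')/b)). apply Rdiv_lt_0_compat; lra. lra. }
  assert (Hds'x : ds'x = - e / a' + Ls / a) by lra.
  assert (Hdsy : dsy = - e / b' + Ls' / b) by lra.
  assert (Ka : e * a < (1 + e) * a').
  { rewrite Hds'x in I3. assert (Ls + Ls' = 1 + e) by (unfold e; lra).
    replace (Ls' + a * (- e / a' + Ls / a)) with (((Ls + Ls') * a' - e * a)/a') in I3 by (field; lra).
    rewrite H in I3. apply (Rmult_lt_reg_r (/ a')). apply Rinv_0_lt_compat; lra.
    unfold Rdiv in I3. lra. }
  assert (Kb : e * b < (1 + e) * b').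
  { rewrite Hdsy in I6. assert (Ls + Ls' = 1 + e) by (unfold e; lra).
    replace (Ls + b * (- e / b' + Ls' / b)) with (((Ls + Ls') * b' - e * b)/b') in I6 by (field; lra).
    rewrite H in I6. apply (Rmult_lt_reg_r (/ b')). apply Rinv_0_lt_compat; lra.
    unfold Rdiv in I6. lra. }
  assert (HLL : Ls + Ls' = 1 + e) by (unfold e; lra).
  set (Det := dsx * ds'y - dsy * ds'x).
  assert (HDet : Det = e * (Ls * a' * b + Ls' * a * b' - e * a * b) / (a * a' * b * b')).
  { unfold Det. rewrite Hdsx, Hds'y, Hds'x, Hdsy. field. lra. }
  assert (Kd : 0 < Ls * a' * b + Ls' * a * b' - e * a * b).
  { assert ((1 + e) * (Ls * a' * b + Ls' * a * b') > e * a * b * (1 + e)).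
    { replace (e * a * b * (1 + e)) with (Ls * (e * a) * b + Ls' * a * (e * b)) by (rewrite <- HLL; ring).
      assert (Ls * (e * a) * b < Ls * ((1 + e) * a') * b).
      { apply Rmult_lt_compat_r; [lra|]. apply Rmult_lt_compat_l; lra. }
      assert (Ls' * a * (e * b) < Ls' * a * ((1 + e) * b')).
      { apply Rmult_lt_compat_l; [|lra]. apply Rmult_lt_0_compat; lra. }
      nra. }
    nra. }
  assert (DetP : 0 < Det).
  { rewrite HDet. apply Rdiv_lt_0_compat; [apply Rmult_lt_0_compat; lra|].
    repeat apply Rmult_lt_0_compat; lra. }
  set (p := (- Ls * ds'y + Ls' * dsy) / Det).
  set (q := (- Ls' * dsx + Ls * ds'x) / Det).
  assert (Ep : - Ls * ds'y + Ls' * dsy = Ls' * ((1 + e) * b' - e * b) / (b * b')).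
  { rewrite Hds'y, Hdsy. rewrite <- HLL. field. lra. }
  assert (Eq : - Ls' * dsx + Ls * ds'x = Ls * ((1 + e) * a' - e * a) / (a * a')).
  { rewrite Hdsx, Hds'x. rewrite <- HLL. field. lra. }
  assert (Pp : 0 < p).
  { unfold p. rewrite Ep. apply Rdiv_lt_0_compat; auto. apply Rdiv_lt_0_compat.
    apply Rmult_lt_0_compat; lra. apply Rmult_lt_0_compat; lra. }
  assert (Pq : 0 < q).
  { unfold q. rewrite Eq. apply Rdiv_lt_0_compat; auto. apply Rdiv_lt_0_compat.
    apply Rmult_lt_0_compat; lra. apply Rmult_lt_0_compat; lra. }
  assert (C1 : Ls + p * dsx + q * dsy = 0) by (unfold p, q, Det in *; field; lra).
  assert (C2 : Ls' + p * ds'x + q * ds'y = 0) by (unfold p, q, Det in *; field; lra).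
  assert (C3 : Lv + p * dvx + q * dvy = 1).
  { replace Lv with (1 - Ls - Ls') by lra. replace dvx with (-dsx-ds'x) by lra.
    replace dvy with (-dsy-ds'y) by lra.
    transitivity (1 - (Ls + p*dsx + q*dsy) - (Ls' + p*ds'x + q*ds'y)); [ring | rewrite C1, C2; ring]. }
  exists p, q. repeat split; auto.
  - rewrite Hdvx, Hdvy in C3.
    assert (X : p * b' + q * a' = (1 + e) / e * (a' * b')).
    { apply (Rmult_eq_reg_r (e / (a' * b'))). 
      replace ((1 + e) / e * (a' * b') * (e / (a' * b'))) with (1 + e) by (field; lra).
      replace (1 + e) with (e + (Lv + p * (e / a') + q * (e / b'))) at 1 by (rewrite C3; ring).
      unfold e. field. lra.
      apply Rgt_not_eq, Rdiv_lt_0_compat; [lra| apply Rmult_lt_0_compat; lra]. }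
    rewrite X. replace ((1 + e) / e * (a' * b')) with (a' * b' + a' * b' / e) by (field; lra).
    assert (0 < a' * b' / e) by (apply Rdiv_lt_0_compat; [apply Rmult_lt_0_compat|]; lra). lra.
  - unfold e in *; lra.
Qed.


Lemma pscale1 W : W = pscale 1 W.
Proof. destruct W; unfold pscale; simpl; f_equal; ring. Qed.

Lemma lam_comb A B C u O p Dx q Dy : nondeg A B C ->
  lam A B C u (padd O (padd (pscale p Dx) (pscale q Dy))) =
  lam A B C u O + p * dl A B C u Dx + q * dl A B C u Dy.
Proof.
  intro H. rewrite (pscale1 (padd (pscale p Dx) (pscale q Dy))), lam_affine, dl_lin by auto. ring.
Qed.

Lemma cone_geo A B C v s s' O Dx Dy a' a b' b : nondeg A B C ->
  v <> s -> v <> s' -> s <> s' -> 0 < a' < a -> 0 < b' < b ->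
  lam A B C v (padd O (pscale a' Dx)) = 0 -> 0 < lam A B C s (padd O (pscale a' Dx)) ->
  lam A B C s (padd O (pscale a Dx)) = 0 -> 0 < lam A B C v (padd O (pscale a Dx)) ->
  0 < lam A B C s' (padd O (pscale a Dx)) ->
  lam A B C v (padd O (pscale b' Dy)) = 0 -> 0 < lam A B C s' (padd O (pscale b' Dy)) ->
  lam A B C s' (padd O (pscale b Dy)) = 0 -> 0 < lam A B C v (padd O (pscale b Dy)) ->
  0 < lam A B C s (padd O (pscale b Dy)) ->
  exists p q, 0 < p /\ 0 < q /\ vert A B C v = padd O (padd (pscale p Dx) (pscale q Dy)) /\
    a' * b' < p * b' + q * a' /\ 0 < dl A B C v (padd (pscale p Dx) (pscale q Dy)).
Proof.
  intros H n1 n2 n3 Ha Hb. rewrite !lam_affine by auto. intros.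
  destruct (cone_alg (lam A B C v O) (lam A B C s O) (lam A B C s' O)
     (dl A B C v Dx) (dl A B C s Dx) (dl A B C s' Dx) (dl A B C v Dy) (dl A B C s Dy) (dl A B C s' Dy)
     a' a b' b) as (p & q & Hp & Hq & C1 & C2 & C3 & C4 & C5); auto.
  { apply sum_three; auto. } { apply dsum_three; auto. } { apply dsum_three; auto. }
  exists p, q. repeat split; auto.
  - apply (lam_eq_all A B C); auto. intro u. rewrite lam_comb, lam_vert' by auto.
    destruct (three_cases v s s' n1 n2 n3 u) as [E|[E|E]]; subst u.
    + rewrite C3; destruct v; simpl; auto.
    + rewrite C1; destruct v, s; simpl; congruence.
    + rewrite C2; destruct v, s'; simpl; congruence.
  - rewrite dl_lin by auto; auto.
Qed.


Definition traj A B C th r (P D : nat -> pt) : Prop :=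
    P 0%nat = A /\ D 0%nat = dir A B C th /\
    (forall k, (k <= r)%nat -> exit_pt A B C (P k) (D k) (P (S k))) /\
    (forall k, (1 <= k <= r)%nat ->
        ~ is_vertex A B C (P k) /\ bounce A B C (P k) (D (pred k)) (D k)) /\
    is_vertex A B C (P (S r)).

Definition sd A B C (P D : nat -> pt) (k : nat) : V3 :=
  epsilon (inhabits VA) (fun v => on_seg (vert A B C (nx v)) (vert A B C (nx (nx v))) (P k) /\
     D k = reflect (wv A B C v) (D (pred k))).
Definition stp (P D : nat -> pt) (k : nat) : R :=
  epsilon (inhabits 0) (fun t => 0 < t /\ P (S k) = padd (P k) (pscale t (D k))).

Lemma vert_in_tri A B C u : nondeg A B C -> in_tri A B C (vert A B C u).
Proof. intro H. apply (in_tri_lam A B C _ H). intro v; rewrite lam_vert' by auto. destruct u, v; simpl; lra. Qed.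

Lemma traj_in A B C th r P D : nondeg A B C -> traj A B C th r P D ->
  forall k, (k <= S r)%nat -> in_tri A B C (P k).
Proof.
  intros H (H0 & _ & He & _) k Hk. destruct k.
  - rewrite H0. apply (vert_in_tri A B C VA H).
  - destruct (He k ltac:(lia)) as (t & _ & _ & Hi & _); auto.
Qed.

Lemma traj_side A B C th r P D : nondeg A B C -> traj A B C th r P D ->
  forall k, (1 <= k <= r)%nat ->
  lam A B C (sd A B C P D k) (P k) = 0 /\
  0 < lam A B C (nx (sd A B C P D k)) (P k) /\ 0 < lam A B C (nx (nx (sd A B C P D k))) (P k) /\
  D k = reflect (wv A B C (sd A B C P D k)) (D (pred k)).
Proof.
  intros H T k Hk. pose proof T as (_ & _ & _ & Hb & _).
  destruct (Hb k Hk) as [Hnv Hbo]. apply bounce_iff in Hbo.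
  pose proof (epsilon_spec (inhabits VA) (fun v => on_seg (vert A B C (nx v)) (vert A B C (nx (nx v))) (P k) /\
     D k = reflect (wv A B C v) (D (pred k))) Hbo) as [Hs Hr].
  fold (sd A B C P D k) in Hs, Hr.
  destruct (onseg_lam A B C _ _ H Hs) as (Hi & H0 & _).
  destruct (nonvertex_pos A B C _ _ H Hi H0 Hnv). auto.
Qed.

Lemma traj_step A B C th r P D : traj A B C th r P D ->
  forall k, (k <= r)%nat ->
  0 < stp P D k /\ P (S k) = padd (P k) (pscale (stp P D k) (D k)).
Proof.
  intros T k Hk. pose proof T as (_ & _ & He & _).
  destruct (He k Hk) as (t & Ht & E & _).
  apply (epsilon_spec (inhabits 0) (fun t => 0 < t /\ P (S k) = padd (P k) (pscale t (D k)))).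
  eauto.
Qed.

Lemma traj_dl A B C th r P D : nondeg A B C -> traj A B C th r P D ->
  forall k, (S k <= r)%nat -> dl A B C (sd A B C P D (S k)) (D k) < 0.
Proof.
  intros H T k Hk. pose proof T as (_ & _ & He & _).
  destruct (traj_side A B C th r P D H T (S k) ltac:(lia)) as (H0 & H1 & H2 & _).
  eapply exit_strict; eauto. apply He; lia.
Qed.

Lemma other_side (u v : V3) : u <> v -> u = nx v \/ u = nx (nx v).
Proof. destruct u, v; simpl; auto; congruence. Qed.

Lemma traj_first A B C th r P D : nondeg A B C -> traj A B C th r P D -> (1 <= r)%nat ->
  sd A B C P D 1 = VA.
Proof.
  intros H T Hr. destruct (traj_side A B C th r P D H T 1 ltac:(lia)) as (H0 & _).
  pose proof T as (E0 & _ & He & Hb & _).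
  destruct (Hb 1%nat ltac:(lia)) as [Hnv _].
  destruct (sd A B C P D 1) eqn:Es; auto; exfalso; apply Hnv;
  (eapply exit_parallel; [exact H| | |apply He; lia|exact H0]);
  [rewrite E0; apply (vert_in_tri A B C VA H)|rewrite E0; apply (lam_vert' A B C VA); auto
  |rewrite E0; apply (vert_in_tri A B C VA H)|rewrite E0; apply (lam_vert' A B C VA); auto].
Qed.

Lemma traj_consec A B C th r P D : nondeg A B C -> traj A B C th r P D ->
  forall k, (1 <= k)%nat -> (S k <= r)%nat -> sd A B C P D k <> sd A B C P D (S k).
Proof.
  intros H T k Hk1 Hk2 E.
  destruct (traj_side A B C th r P D H T k ltac:(lia)) as (H0 & _).
  destruct (traj_side A B C th r P D H T (S k) ltac:(lia)) as (H1 & _).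
  pose proof T as (_ & _ & He & Hb & _).
  destruct (Hb (S k) ltac:(lia)) as [Hnv _]. apply Hnv.
  eapply exit_parallel; [exact H| | exact H0 |apply He; lia|rewrite E; exact H1].
  apply (traj_in A B C th r P D H T); lia.
Qed.

Lemma traj_final A B C th r P D : nondeg A B C -> traj A B C th r P D -> (1 <= r)%nat ->
  P (S r) = vert A B C (sd A B C P D r).
Proof.
  intros H T Hr. pose proof T as (_ & _ & He & Hb & Hv).
  apply vertex_iff in Hv as [u Hu]. rewrite Hu. f_equal.
  destruct (classic (u = sd A B C P D r)) as [|Hne]; auto. exfalso.
  set (v := sd A B C P D r) in *.
  destruct (traj_side A B C th r P D H T r ltac:(lia)) as (H0 & _ & _ & HR). fold v in H0, HR.
  assert (L1 : lam A B C v (P (S r)) = 0) by (rewrite Hu, lam_vert'; auto; destruct u, v; simpl; congruence).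
  destruct (traj_step A B C th r P D T r ltac:(lia)) as [Ht Et].
  rewrite Et, lam_affine, H0 in L1 by auto.
  assert (dl A B C v (D r) = 0) by nra.
  rewrite HR, dl_reflect in H1 by auto.
  destruct r as [|r']; [lia|]. simpl in *.
  destruct (traj_step A B C th (S r') P D T r' ltac:(lia)) as [Ht' Et'].
  assert (L2 : lam A B C v (P r') = 0).
  { rewrite Et', lam_affine in H0 by auto. nra. }
  destruct (Hb (S r') ltac:(lia)) as [Hnv _]. apply Hnv.
  eapply exit_parallel; [exact H| |exact L2|apply He; lia|exact H0].
  apply (traj_in A B C th (S r') P D H T); lia.
Qed.


Fixpoint Ofun A B C (s : nat -> V3) (k : nat) : pt :=
  match k with 0%nat => A | S j => refl_pt A B C (s (S j)) (Ofun A B C s j) end.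
Fixpoint afun (t : nat -> R) (k : nat) : R :=
  match k with 0%nat => 0 | S j => afun t j + t j end.

Lemma afun_nonneg t r : (forall k, (k <= r)%nat -> 0 < t k) -> forall j, (j <= S r)%nat -> 0 <= afun t j.
Proof.
  intros Ht j; induction j; simpl; intro Hj; [lra|]. pose proof (Ht j ltac:(lia)). pose proof (IHj ltac:(lia)). lra.
Qed.

Lemma afun_pos t r : (forall k, (k <= r)%nat -> 0 < t k) -> forall j, (1 <= j <= S r)%nat -> 0 < afun t j.
Proof.
  intros Ht j Hj. destruct j; [lia|]. simpl. pose proof (Ht j ltac:(lia)).
  pose proof (afun_nonneg t r Ht j ltac:(lia)). lra.
Qed.

Lemma refl_step A B C v O a D Q : nondeg A B C -> Q = padd O (pscale a D) -> lam A B C v Q = 0 ->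
  Q = padd (refl_pt A B C v O) (pscale a (reflect (wv A B C v) D)).
Proof.
  intros H E H0. rewrite <- refl_pt_lin, <- E. symmetry. apply refl_fix; auto.
Qed.

Lemma padd_step O a D t : padd (padd O (pscale a D)) (pscale t D) = padd O (pscale (a + t) D).
Proof. unfold padd, pscale; dpts; simpl; f_equal; ring. Qed.

Definition agree (sx sy : nat -> V3) j := forall i, (1 <= i <= j)%nat -> sx i = sy i.

Lemma invariant A B C x y r Px Dx Py Dy : nondeg A B C ->
  traj A B C x r Px Dx -> traj A B C y r Py Dy ->
  forall j, (j <= r)%nat -> agree (sd A B C Px Dx) (sd A B C Py Dy) j ->
  Px j = padd (Ofun A B C (sd A B C Px Dx) j) (pscale (afun (stp Px Dx) j) (Dx j)) /\
  Py j = padd (Ofun A B C (sd A B C Px Dx) j) (pscale (afun (stp Py Dy) j) (Dy j)).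
Proof.
  intros H Tx Ty j. induction j; intros Hj Ha.
  - pose proof Tx as (Ex & _). pose proof Ty as (Ey & _). simpl. rewrite Ex, Ey.
    split; unfold padd, pscale; dpts; simpl; f_equal; ring.
  - destruct IHj as [Ix Iy]; [lia| intros i Hi; apply Ha; lia|].
    destruct (traj_step A B C x r Px Dx Tx j ltac:(lia)) as [_ Sx].
    destruct (traj_step A B C y r Py Dy Ty j ltac:(lia)) as [_ Sy].
    destruct (traj_side A B C x r Px Dx H Tx (S j) ltac:(lia)) as (Lx & _ & _ & Rx).
    destruct (traj_side A B C y r Py Dy H Ty (S j) ltac:(lia)) as (Ly & _ & _ & Ry).
    rewrite <- (Ha (S j) ltac:(lia)) in Ly, Ry.
    simpl in Rx, Ry |- *. rewrite Rx, Ry. split.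
    + apply refl_step; auto. rewrite Sx, Ix, padd_step. reflexivity.
    + apply refl_step; auto. rewrite Sy, Iy, padd_step. reflexivity.
Qed.

Lemma pre_inv A B C th r P D O a j : traj A B C th r P D -> (j <= r)%nat ->
  P j = padd O (pscale (afun a j) (D j)) -> a = stp P D ->
  P (S j) = padd O (pscale (afun a (S j)) (D j)).
Proof.
  intros T Hj E Ea. subst a. destruct (traj_step A B C th r P D T j Hj) as [_ S].
  rewrite S, E, padd_step. reflexivity.
Qed.

Lemma find_first (f g : nat -> V3) r : exists m, (m <= r)%nat /\ agree f g m /\
  ((m < r)%nat -> f (S m) <> g (S m)).
Proof.
  induction r.
  - exists 0%nat. split; [lia|]. split; [intros i Hi; lia|lia].
  - destruct IHr as (m & Hm & Ha & Hn).
    destruct (Nat.lt_ge_cases m r).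
    + exists m. split; [lia|]. split; [exact Ha|]. intros _; apply Hn; auto.
    + assert (m = r) by lia. subst m.
      destruct (classic (f (S r) = g (S r))).
      * exists (S r). split; [lia|]. split; [|lia]. intros i Hi.
        destruct (Nat.eq_dec i (S r)); [subst; auto| apply Ha; lia].
      * exists r. split; [lia|]. split; [exact Ha|auto].
Qed.


Lemma reflect_scale w a d : pscale a (reflect w d) = reflect w (pscale a d).
Proof. unfold reflect; dpts; unfold psub, pscale, dot; simpl; f_equal; unfold Rdiv; ring. Qed.

Lemma padd_cancel O P Q : padd O P = padd O Q -> P = Q.
Proof. unfold padd; dpts; simpl; intro E; injection E; intros; f_equal; lra. Qed.

Lemma final_case A B C x y r Px Dx Py Dy : nondeg A B C ->
  in_I A B C x -> in_I A B C y -> x < y -> (1 <= r)%nat ->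
  traj A B C x r Px Dx -> traj A B C y r Py Dy ->
  agree (sd A B C Px Dx) (sd A B C Py Dy) r -> False.
Proof.
  intros H Hx Hy Hxy Hr Tx Ty Ha.
  destruct (invariant A B C x y r Px Dx Py Dy H Tx Ty r ltac:(lia) Ha) as [Ix Iy].
  pose proof (pre_inv A B C x r Px Dx _ _ r Tx ltac:(lia) Ix eq_refl) as Fx.
  pose proof (pre_inv A B C y r Py Dy _ _ r Ty ltac:(lia) Iy eq_refl) as Fy.
  rewrite (traj_final A B C x r Px Dx H Tx Hr) in Fx.
  rewrite (traj_final A B C y r Py Dy H Ty Hr) in Fy.
  rewrite <- (Ha r ltac:(lia)) in Fy. rewrite Fx in Fy. apply padd_cancel in Fy.
  set (a := afun (stp Px Dx) (S r)) in *. set (b := afun (stp Py Dy) (S r)) in *.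
  assert (Pa : 0 < a).
  { apply (afun_pos _ r); [|lia]. intros k Hk; apply (traj_step A B C x r Px Dx Tx k Hk). }
  assert (Pb : 0 < b).
  { apply (afun_pos _ r); [|lia]. intros k Hk; apply (traj_step A B C y r Py Dy Ty k Hk). }
  assert (PB : forall j, (j <= r)%nat -> pscale a (Dx j) = pscale b (Dy j) -> pscale a (Dx 0%nat) = pscale b (Dy 0%nat)).
  { induction j; intros Hj E; auto. apply IHj; [lia|].
    destruct (traj_side A B C x r Px Dx H Tx (S j) ltac:(lia)) as (_ & _ & _ & Rx).
    destruct (traj_side A B C y r Py Dy H Ty (S j) ltac:(lia)) as (_ & _ & _ & Ry).
    rewrite <- (Ha (S j) ltac:(lia)) in Ry. simpl in Rx, Ry.
    rewrite Rx, Ry, !reflect_scale in E.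
    rewrite <- (reflect_invol (wv A B C (sd A B C Px Dx (S j))) (pscale a (Dx j))), E.
    apply reflect_invol, wv_nz; auto. apply wv_nz; auto. }
  pose proof (PB r ltac:(lia) Fy) as E0.
  pose proof Tx as (_ & Dx0 & _). pose proof Ty as (_ & Dy0 & _).
  rewrite Dx0, Dy0 in E0.
  apply (dir_combo_neq A B C x y a b); auto.
Qed.


Lemma conv_id O Dx Dy a b al be : 0 < a -> 0 < b -> 0 < al -> 0 < be ->
  padd O (pscale (a * b / (al * b + be * a)) (padd (pscale al Dx) (pscale be Dy))) =
  padd (pscale (al * b / (al * b + be * a)) (padd O (pscale a Dx)))
       (pscale (1 - al * b / (al * b + be * a)) (padd O (pscale b Dy))).
Proof.
  intros. assert (0 < al * b + be * a) by nra.
  unfold padd, pscale; dpts; simpl; f_equal; field; lra.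
Qed.

Lemma lam_convex A B C u mu P Q : nondeg A B C ->
  lam A B C u (padd (pscale mu P) (pscale (1 - mu) Q)) = mu * lam A B C u P + (1 - mu) * lam A B C u Q.
Proof. intro H; destruct u; gsimp; field; exact H. Qed.

Lemma mu_bounds a b al be : 0 < a -> 0 < b -> 0 < al -> 0 < be ->
  0 < al * b / (al * b + be * a) < 1.
Proof.
  intros. assert (0 < al * b + be * a) by nra. split.
  - apply Rdiv_lt_0_compat; nra.
  - apply (Rmult_lt_reg_r (al * b + be * a)); auto. unfold Rdiv. rewrite Rmult_assoc, Rinv_l by lra. nra.
Qed.

Lemma cc_mono a b a' b' al be : 0 < a -> 0 < b -> a < a' -> b < b' -> 0 < al -> 0 < be ->
  a * b / (al * b + be * a) < a' * b' / (al * b' + be * a').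
Proof.
  intros. assert (0 < al * b + be * a) by nra. assert (0 < al * b' + be * a') by nra.
  apply (Rmult_lt_reg_r ((al * b + be * a) * (al * b' + be * a'))); [nra|].
  replace (a * b / (al * b + be * a) * ((al * b + be * a) * (al * b' + be * a'))) with (a * b * (al * b' + be * a')) by (field; lra).
  replace (a' * b' / (al * b' + be * a') * ((al * b + be * a) * (al * b' + be * a'))) with (a' * b' * (al * b + be * a)) by (field; lra).
  assert (al * a * b * b' < al * a' * b * b').
  { apply Rmult_lt_compat_r; [lra|]. apply Rmult_lt_compat_r; [lra|]. apply Rmult_lt_compat_l; lra. }
  assert (be * a * a' * b < be * a * a' * b').
  { apply Rmult_lt_compat_l; [|lra]. repeat apply Rmult_lt_0_compat; lra. }
  nra.
Qed.

Lemma cc_pos a b al be : 0 < a -> 0 < b -> 0 < al -> 0 < be -> 0 < a * b / (al * b + be * a).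
Proof. intros. apply Rdiv_lt_0_compat; nra. Qed.

Lemma in_tri_convex A B C mu P Q : nondeg A B C -> 0 <= mu <= 1 -> in_tri A B C P -> in_tri A B C Q ->
  in_tri A B C (padd (pscale mu P) (pscale (1 - mu) Q)).
Proof.
  intros H Hm HP HQ. apply (in_tri_lam A B C _ H). pose proof (proj1 (in_tri_lam A B C P H) HP) as HP'. pose proof (proj1 (in_tri_lam A B C Q H) HQ) as HQ'. intro u.
  rewrite lam_convex by auto. specialize (HP' u); specialize (HQ' u). nra.
Qed.

Lemma padd_shift P t D s : padd P (pscale s D) = padd (padd P (pscale t D)) (pscale (s - t) D).
Proof. unfold padd, pscale; dpts; simpl; f_equal; ring. Qed.

Lemma not_in_tri_neg A B C u Q : nondeg A B C -> lam A B C u Q < 0 -> ~ in_tri A B C Q.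
Proof. intros H Hl Hi. pose proof (proj1 (in_tri_lam A B C Q H) Hi u). lra. Qed.


Lemma pos_other A B C v u Q : lam A B C v Q = 0 -> 0 < lam A B C (nx v) Q ->
  0 < lam A B C (nx (nx v)) Q -> u <> v -> 0 < lam A B C u Q.
Proof. intros _ H1 H2 Hu. destruct (other_side u v Hu) as [E|E]; rewrite E; auto. Qed.

Lemma diff_case A B C x y r Px Dx Py Dy m : nondeg A B C ->
  in_I A B C x -> in_I A B C y -> x < y -> (1 <= r)%nat ->
  traj A B C x r Px Dx -> traj A B C y r Py Dy -> (m < r)%nat ->
  agree (sd A B C Px Dx) (sd A B C Py Dy) m ->
  sd A B C Px Dx (S m) <> sd A B C Py Dy (S m) ->
  exists z, x < z < y /\ has_index A B C z m.
Proof.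
  intros H Hx Hy Hxy Hr Tx Ty Hm Ha Hd.
  assert (Hm1 : (1 <= m)%nat).
  { destruct m; [|lia]. exfalso; apply Hd.
    rewrite (traj_first A B C x r Px Dx H Tx Hr), (traj_first A B C y r Py Dy H Ty Hr). reflexivity. }
  set (sx := sd A B C Px Dx) in *. set (sy := sd A B C Py Dy) in *.
  set (O := Ofun A B C sx).
  set (ax := afun (stp Px Dx)). set (ay := afun (stp Py Dy)).
  assert (Stx : forall k, (k <= r)%nat -> 0 < stp Px Dx k) by (intros; apply (traj_step A B C x r Px Dx Tx); auto).
  assert (Sty : forall k, (k <= r)%nat -> 0 < stp Py Dy k) by (intros; apply (traj_step A B C y r Py Dy Ty); auto).
  assert (Iv : forall j, (j <= m)%nat -> Px j = padd (O j) (pscale (ax j) (Dx j)) /\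
                                      Py j = padd (O j) (pscale (ay j) (Dy j))).
  { intros j Hj. apply (invariant A B C x y r Px Dx Py Dy H Tx Ty j); [lia| intros i Hi; apply Ha; lia]. }
  assert (Pv : forall j, (j <= m)%nat -> Px (S j) = padd (O j) (pscale (ax (S j)) (Dx j)) /\
                                      Py (S j) = padd (O j) (pscale (ay (S j)) (Dy j))).
  { intros j Hj. destruct (Iv j Hj). split; eapply pre_inv; eauto; lia. }
  assert (Pax : forall j, (1 <= j <= S r)%nat -> 0 < ax j) by (apply (afun_pos _ r); auto).
  assert (Pay : forall j, (1 <= j <= S r)%nat -> 0 < ay j) by (apply (afun_pos _ r); auto).
  assert (Max : forall j, (j <= r)%nat -> ax j < ax (S j)) by (intros j Hj; unfold ax; simpl; pose proof (Stx j Hj); lra).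
  assert (May : forall j, (j <= r)%nat -> ay j < ay (S j)) by (intros j Hj; unfold ay; simpl; pose proof (Sty j Hj); lra).
  set (v := sx m). assert (Hvy : sy m = v) by (symmetry; apply Ha; lia).
  set (s := sx (S m)) in *. set (s' := sy (S m)) in *.
  assert (n1 : v <> s) by (apply (traj_consec A B C x r Px Dx H Tx); lia).
  assert (n2 : v <> s') by (rewrite <- Hvy; apply (traj_consec A B C y r Py Dy H Ty); lia).
  destruct (traj_side A B C x r Px Dx H Tx m ltac:(lia)) as (Lxm & Pxm1 & Pxm2 & _). fold sx v in Lxm, Pxm1, Pxm2.
  destruct (traj_side A B C x r Px Dx H Tx (S m) ltac:(lia)) as (LxS & PxS1 & PxS2 & _). fold sx s in LxS, PxS1, PxS2.
  destruct (traj_side A B C y r Py Dy H Ty m ltac:(lia)) as (Lym & Pym1 & Pym2 & _). fold sy in Lym, Pym1, Pym2. rewrite Hvy in Lym, Pym1, Pym2.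
  destruct (traj_side A B C y r Py Dy H Ty (S m) ltac:(lia)) as (LyS & PyS1 & PyS2 & _). fold sy s' in LyS, PyS1, PyS2.
  destruct (Iv m ltac:(lia)) as [Ixm Iym]. destruct (Pv m ltac:(lia)) as [PSx PSy].
  destruct (cone_geo A B C v s s' (O m) (Dx m) (Dy m) (ax m) (ax (S m)) (ay m) (ay (S m)))
    as (p & q & Hp & Hq & Ev & C4 & C5); auto.
  { split; [apply Pax; lia| apply Max; lia]. }
  { split; [apply Pay; lia| apply May; lia]. }
  { rewrite <- Ixm; auto. }
  { rewrite <- Ixm; apply (pos_other A B C v); auto. }
  { rewrite <- PSx; auto. }
  { rewrite <- PSx; apply (pos_other A B C s); auto. }
  { rewrite <- PSx; apply (pos_other A B C s); auto. }
  { rewrite <- Iym; auto. }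
  { rewrite <- Iym; apply (pos_other A B C v); auto. }
  { rewrite <- PSy; auto. }
  { rewrite <- PSy; apply (pos_other A B C s'); auto. }
  { rewrite <- PSy; apply (pos_other A B C s'); auto. }
  destruct (dir_between A B C x y p q H Hx Hy Hxy Hp Hq) as (z & N & Hz & HIz & HN & Edz).
  set (al := p / N). set (be := q / N).
  assert (Hal : 0 < al) by (apply Rdiv_lt_0_compat; auto).
  assert (Hbe : 0 < be) by (apply Rdiv_lt_0_compat; auto).
  set (Dz := fun j => padd (pscale al (Dx j)) (pscale be (Dy j))).
  set (cc := fun j => ax j * ay j / (al * ay j + be * ax j)).
  set (Pz := fun j => if Nat.leb j m then padd (O j) (pscale (cc j) (Dz j)) else vert A B C v).
  set (mu := fun a b => al * b / (al * b + be * a)).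
  assert (Cv : forall j, (1 <= j <= m)%nat ->
     Pz j = padd (pscale (mu (ax j) (ay j)) (Px j)) (pscale (1 - mu (ax j) (ay j)) (Py j))).
  { intros j Hj. unfold Pz. replace (Nat.leb j m) with true by (symmetry; apply Nat.leb_le; lia).
    destruct (Iv j ltac:(lia)) as [E1 E2]. rewrite E1, E2. unfold cc, Dz, mu.
    apply conv_id; [apply Pax; lia|apply Pay; lia|auto|auto]. }
  set (Qpre := fun j => padd (O j) (pscale (cc (S j)) (Dz j))).
  assert (Cp : forall j, (j <= m)%nat ->
     Qpre j = padd (pscale (mu (ax (S j)) (ay (S j))) (Px (S j))) (pscale (1 - mu (ax (S j)) (ay (S j))) (Py (S j)))).
  { intros j Hj. destruct (Pv j Hj) as [E1 E2]. rewrite E1, E2. unfold Qpre, cc, Dz, mu.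
    apply conv_id; [apply Pax; lia|apply Pay; lia|auto|auto]. }
  assert (Mub : forall j, (1 <= j <= S r)%nat -> 0 < mu (ax j) (ay j) < 1).
  { intros j Hj. unfold mu. apply mu_bounds; [apply Pax; lia|apply Pay; lia|auto|auto]. }
  assert (SideEq : forall j, (1 <= j <= m)%nat -> sy j = sx j) by (intros; symmetry; apply Ha; lia).
  assert (Rz : forall j, (1 <= j <= m)%nat -> Dz j = reflect (wv A B C (sx j)) (Dz (pred j))).
  { intros j Hj. destruct (traj_side A B C x r Px Dx H Tx j ltac:(lia)) as (_ & _ & _ & Rx).
    destruct (traj_side A B C y r Py Dy H Ty j ltac:(lia)) as (_ & _ & _ & Ry).
    fold sx in Rx. fold sy in Ry. rewrite SideEq in Ry by auto.
    unfold Dz. rewrite reflect_lin, <- Rx, <- Ry. reflexivity. }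
  assert (LamC : forall j u, (1 <= j <= m)%nat -> lam A B C u (Pz j) =
      mu (ax j) (ay j) * lam A B C u (Px j) + (1 - mu (ax j) (ay j)) * lam A B C u (Py j)).
  { intros j u Hj. rewrite Cv by auto. apply lam_convex; auto. }
  assert (SideZ : forall j, (1 <= j <= m)%nat -> lam A B C (sx j) (Pz j) = 0 /\ 0 < lam A B C (nx (sx j)) (Pz j) /\ 0 < lam A B C (nx (nx (sx j))) (Pz j)).
  { intros j Hj. destruct (traj_side A B C x r Px Dx H Tx j ltac:(lia)) as (L1 & L2 & L3 & _).
    destruct (traj_side A B C y r Py Dy H Ty j ltac:(lia)) as (M1 & M2 & M3 & _).
    fold sx in L1, L2, L3. fold sy in M1, M2, M3. rewrite SideEq in M1, M2, M3 by auto.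
    destruct (Mub j ltac:(lia)). rewrite !LamC by auto. repeat split; nra. }
  assert (InZ : forall j, (j <= m)%nat -> in_tri A B C (Pz j)).
  { intros j Hj. destruct j.
    - unfold Pz; simpl. unfold cc, ax, ay; simpl. rewrite !Rmult_0_l.
      replace (padd (O 0%nat) (pscale (0 / _) _)) with A. apply (vert_in_tri A B C VA H).
      unfold O; simpl; unfold padd, pscale; dpts; simpl; f_equal; unfold Rdiv; ring.
    - rewrite Cv by lia. destruct (Mub (S j) ltac:(lia)). apply in_tri_convex; [auto|lra| |].
      + apply (traj_in A B C x r Px Dx H Tx); lia.
      + apply (traj_in A B C y r Py Dy H Ty); lia. }
  assert (PzS : forall j, (S j <= m)%nat -> Pz (S j) = Qpre j).
  { intros j Hj. unfold Pz at 1. replace (Nat.leb (S j) m) with true by (symmetry; apply Nat.leb_le; lia).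
    assert (L0 : lam A B C (sx (S j)) (Qpre j) = 0).
    { rewrite Cp by lia. rewrite lam_convex by auto.
      destruct (traj_side A B C x r Px Dx H Tx (S j) ltac:(lia)) as (L1 & _).
      destruct (traj_side A B C y r Py Dy H Ty (S j) ltac:(lia)) as (M1 & _).
      fold sx in L1. fold sy in M1. rewrite SideEq in M1 by lia. rewrite L1, M1. ring. }
    rewrite (refl_step A B C (sx (S j)) (O j) (cc (S j)) (Dz j) (Qpre j) H eq_refl L0).
    rewrite (Rz (S j)) by lia. reflexivity. }
  exists z. split; auto. split; auto. exists Pz, Dz.
  split; [|split; [|split; [|split]]].
  - unfold Pz; simpl. unfold cc, ax, ay; simpl. rewrite !Rmult_0_l.
    unfold O; simpl; unfold padd, pscale; dpts; simpl; f_equal; unfold Rdiv; ring.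
  - unfold Dz. destruct Tx as (_ & E1 & _). destruct Ty as (_ & E2 & _). rewrite E1, E2, Edz.
    unfold al, be. unfold padd, pscale; dpts; simpl; f_equal; unfold Rdiv; ring.
  - intros k Hk.
    assert (PzK : Pz k = padd (O k) (pscale (cc k) (Dz k))).
    { unfold Pz. replace (Nat.leb k m) with true by (symmetry; apply Nat.leb_le; lia). reflexivity. }
    destruct (Nat.lt_ge_cases k m) as [Hlt|Hge].
    + rewrite (PzS k) by lia. exists (cc (S k) - cc k).
      assert (Ccs : cc k < cc (S k)).
      { destruct k.
        * unfold cc, ax, ay; simpl afun at 1 2. rewrite Rmult_0_l, Rdiv_0_l.
          apply cc_pos; [apply Pax; lia|apply Pay; lia|auto|auto].
        * apply cc_mono; [apply Pax; lia|apply Pay; lia|apply Max; lia|apply May; lia|auto|auto]. }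
      split; [lra|split; [|split]].
      * unfold Qpre. rewrite PzK, padd_step. f_equal; f_equal; ring.
      * rewrite <- PzS by lia. apply InZ; lia.
      * intros s0 Hs0. rewrite (padd_shift _ (cc (S k) - cc k)).
        replace (padd (Pz k) (pscale (cc (S k) - cc k) (Dz k))) with (Qpre k)
          by (unfold Qpre; rewrite PzK, padd_step; f_equal; f_equal; ring).
        apply (not_in_tri_neg A B C (sx (S k))); auto.
        rewrite lam_affine by auto. rewrite <- PzS by lia.
        destruct (SideZ (S k) ltac:(lia)) as (Z1 & _). rewrite Z1.
        unfold Dz. rewrite dl_lin by auto.
        pose proof (traj_dl A B C x r Px Dx H Tx k ltac:(lia)) as D1.
        pose proof (traj_dl A B C y r Py Dy H Ty k ltac:(lia)) as D2.
        fold sx in D1. fold sy in D2. rewrite SideEq in D2 by lia.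
        assert (Ht0 : 0 < s0 - (cc (S k) - cc k)) by lra.
        assert (X : al * dl A B C (sx (S k)) (Dx k) + be * dl A B C (sx (S k)) (Dy k) < 0).
        { pose proof (Rmult_lt_0_compat _ _ Hal (Ropp_0_gt_lt_contravar _ D1)).
          pose proof (Rmult_lt_0_compat _ _ Hbe (Ropp_0_gt_lt_contravar _ D2)). lra. }
        pose proof (Rmult_lt_0_compat _ _ Ht0 (Ropp_0_gt_lt_contravar _ X)). lra.
    + assert (k = m) by lia. subst k.
      unfold Pz at 2. replace (Nat.leb (S m) m) with false by (symmetry; apply Nat.leb_gt; lia).
      assert (EvN : vert A B C v = padd (Pz m) (pscale (N - cc m) (Dz m))).
      { rewrite PzK, padd_step, Ev. unfold Dz, al, be.
        unfold padd, pscale; dpts; simpl; f_equal; field; lra. }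
      assert (Ccm : cc m < N).
      { unfold cc, al, be.
        assert (0 < ax m) by (apply Pax; lia). assert (0 < ay m) by (apply Pay; lia).
        replace (ax m * ay m / (p / N * ay m + q / N * ax m)) with (N * (ax m * ay m / (p * ay m + q * ax m)))
          by (field; split; nra).
        assert (ax m * ay m / (p * ay m + q * ax m) < 1).
        { apply (Rmult_lt_reg_r (p * ay m + q * ax m)); [nra|].
          unfold Rdiv; rewrite Rmult_assoc, Rinv_l by nra. lra. }
        nra. }
      exists (N - cc m). split; [lra|split; [exact EvN|split]].
      * apply vert_in_tri; auto.
      * intros s0 Hs0. rewrite (padd_shift _ (N - cc m)), <- EvN.
        assert (Dv : 0 < dl A B C v (Dz m)).
        { unfold Dz, al, be. rewrite dl_lin by auto. rewrite dl_lin in C5 by auto.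
          replace (p / N * dl A B C v (Dx m) + q / N * dl A B C v (Dy m))
            with (/ N * (p * dl A B C v (Dx m) + q * dl A B C v (Dy m))) by (field; lra).
          apply Rmult_lt_0_compat; auto. apply Rinv_0_lt_compat; auto. }
        set (W := padd (vert A B C v) (pscale (s0 - (N - cc m)) (Dz m))).
        assert (Lv : 1 < lam A B C v W).
        { unfold W. rewrite lam_affine, lam_vert' by auto. destruct v; simpl; nra. }
        pose proof (lam_sum3 A B C v W H).
        destruct (Rlt_dec (lam A B C (nx v) W) 0).
        -- apply (not_in_tri_neg A B C (nx v)); auto.
        -- apply (not_in_tri_neg A B C (nx (nx v))); auto. lra.
  - intros k Hk. destruct (SideZ k Hk) as (Z1 & Z2 & Z3). split.
    + apply (pos_nonvertex A B C (sx k)); auto.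
    + apply bounce_iff. exists (sx k). split.
      * apply lam_onseg; auto. apply InZ; lia.
      * apply Rz; auto.
  - unfold Pz. replace (Nat.leb (S m) m) with false by (symmetry; apply Nat.leb_gt; lia).
    apply vertex_iff. eauto.
Qed.


Lemma key A B C x y r : nondeg A B C -> has_index A B C x r -> has_index A B C y r ->
  x < y -> (1 <= r)%nat -> exists z p, x < z < y /\ (p < r)%nat /\ has_index A B C z p.
Proof.
  intros H [HIx (Px & Dx & Tx)] [HIy (Py & Dy & Ty)] Hxy Hr.
  change (traj A B C x r Px Dx) in Tx. change (traj A B C y r Py Dy) in Ty.
  destruct (find_first (sd A B C Px Dx) (sd A B C Py Dy) r) as (m & Hm & Ha & Hn).
  destruct (Nat.eq_dec m r) as [E|E].
  - subst m. exfalso. eapply (final_case A B C x y r Px Dx Py Dy); eauto.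
  - destruct (diff_case A B C x y r Px Dx Py Dy m H HIx HIy Hxy Hr Tx Ty ltac:(lia) Ha (Hn ltac:(lia)))
      as (z & Hz & Hi). exists z, m. split; auto. split; auto. lia.
Qed.

Fixpoint maxb (L : list R) (y : R) : option R :=
  match L with
  | nil => None
  | z :: L' => match maxb L' y with
               | None => if Rlt_dec z y then Some z else None
               | Some w => if Rlt_dec z y then Some (Rmax z w) else Some w
               end
  end.
Fixpoint minab (L : list R) (y : R) : option R :=
  match L with
  | nil => None
  | z :: L' => match minab L' y with
               | None => if Rlt_dec y z then Some z else None
               | Some w => if Rlt_dec y z then Some (Rmin z w) else Some w
               end
  end.

Lemma maxb_none L y : maxb L y = None -> forall z, In z L -> ~ z < y.
Proof.
  induction L as [|a L IH]; simpl; [tauto|].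
  destruct (maxb L y) eqn:E; destruct (Rlt_dec a y); try discriminate;
  intros _ z [Ez|Hz]; [subst z; auto| apply IH; auto].
Qed.

Lemma maxb_some L y w : maxb L y = Some w -> In w L /\ w < y /\ forall z, In z L -> z < y -> z <= w.
Proof.
  revert w. induction L as [|a L IH]; simpl; intros w Hw; [discriminate|].
  destruct (maxb L y) as [w'|] eqn:E; destruct (Rlt_dec a y) as [Ha|Ha]; try discriminate; injection Hw; intro Ew; subst w.
  - destruct (IH w' eq_refl) as (I1 & I2 & I3). unfold Rmax; destruct (Rle_dec a w').
    + split; [right; auto|split; auto]. intros z [Ez|Hz] Hzy; [subst z; auto|auto].
    + split; [left; auto|split; auto]. intros z [Ez|Hz] Hzy; [subst z; lra|]. pose proof (I3 z Hz Hzy); lra.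
  - destruct (IH w' eq_refl) as (I1 & I2 & I3). split; [right; auto|split; auto].
    intros z [Ez|Hz] Hzy; [subst z; lra|auto].
  - split; [left; auto|split; auto]. intros z [Ez|Hz] Hzy; [subst z; lra|].
    exfalso; apply (maxb_none L y E z Hz Hzy).
Qed.

Lemma minab_none L y : minab L y = None -> forall z, In z L -> ~ y < z.
Proof.
  induction L as [|a L IH]; simpl; [tauto|].
  destruct (minab L y) eqn:E; destruct (Rlt_dec y a); try discriminate;
  intros _ z [Ez|Hz]; [subst z; auto| apply IH; auto].
Qed.

Lemma minab_some L y w : minab L y = Some w -> In w L /\ y < w /\ forall z, In z L -> y < z -> w <= z.
Proof.
  revert w. induction L as [|a L IH]; simpl; intros w Hw; [discriminate|].
  destruct (minab L y) as [w'|] eqn:E; destruct (Rlt_dec y a) as [Ha|Ha]; try discriminate; injection Hw; intro Ew; subst w.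
  - destruct (IH w' eq_refl) as (I1 & I2 & I3). unfold Rmin; destruct (Rle_dec a w').
    + split; [left; auto|split; auto]. intros z [Ez|Hz] Hzy; [subst z; lra|]. pose proof (I3 z Hz Hzy); lra.
    + split; [right; auto|split; auto]. intros z [Ez|Hz] Hzy; [subst z; lra|auto].
  - destruct (IH w' eq_refl) as (I1 & I2 & I3). split; [right; auto|split; auto].
    intros z [Ez|Hz] Hzy; [subst z; lra|auto].
  - split; [left; auto|split; auto]. intros z [Ez|Hz] Hzy; [subst z; lra|].
    exfalso; apply (minab_none L y E z Hz Hzy).
Qed.

Lemma ex_max (Q : nat -> Prop) N : Q 0%nat -> (forall k, Q k -> (k <= N)%nat) ->
  exists k, Q k /\ forall j, Q j -> (j <= k)%nat.
Proof.
  intros H0 HB.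
  assert (S : forall d k, Q k -> (N - k <= d)%nat -> exists k', Q k' /\ forall j, Q j -> (j <= k')%nat).
  { induction d; intros k Hk Hd.
    - exists k. split; auto. intros j Hj. pose proof (HB j Hj); pose proof (HB k Hk). lia.
    - destruct (classic (exists j, Q j /\ (k < j)%nat)) as [(j & Hj & Hkj)|Hno].
      + apply (IHd j Hj). pose proof (HB j Hj). lia.
      + exists k. split; auto. intros j Hj. destruct (Nat.le_gt_cases j k); auto.
        exfalso; apply Hno; eauto. }
  apply (S N 0%nat H0). lia.
Qed.

Lemma bounded_list (P : R -> Prop) N :
  (forall l, NoDup l -> (forall y, In y l -> P y) -> (length l <= N)%nat) ->
  exists L, forall y, P y <-> In y L.
Proof.
  intro HB.
  destruct (ex_max (fun k => exists l, NoDup l /\ (forall y, In y l -> P y) /\ length l = k) N)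
    as (k & (L & HL1 & HL2 & HL3) & Hmax).
  - exists nil. split; [constructor|split; [simpl; tauto|reflexivity]].
  - intros k (l & H1 & H2 & H3). subst k. apply HB; auto.
  - exists L. intro y. split; [|auto]. intro Hy.
    destruct (classic (In y L)) as [|Hn]; auto. exfalso.
    assert (S k <= k)%nat; [|lia]. apply Hmax. exists (y :: L). split; [constructor; auto|].
    split; [intros z [Ez|Hz]; [subst z; auto|auto]|simpl; lia].
Qed.

Lemma cut_mono A B C m m' y : cut A B C m y -> (m <= m')%nat -> cut A B C m' y.
Proof. intros (p & Hp & Hi) Hm. exists p. split; auto. lia. Qed.

Lemma min_index A B C x p : has_index A B C x p ->
  exists r, (r <= p)%nat /\ has_index A B C x r /\ forall q, (q < r)%nat -> ~ has_index A B C x q.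
Proof.
  induction p as [p IH] using (well_founded_induction Wf_nat.lt_wf). intro Hp.
  destruct (classic (exists q, (q < p)%nat /\ has_index A B C x q)) as [(q & Hq & Hi)|Hno].
  - destruct (IH q Hq Hi) as (r & Hr & Hr2 & Hr3). exists r. split; [lia|auto].
  - exists p. split; auto. split; auto. intros q Hq Hi; apply Hno; eauto.
Qed.


Lemma exact_of_cut A B C m y : cut A B C (S m) y -> ~ cut A B C m y -> has_index A B C y (S m).
Proof.
  intros (p & Hp & Hi) Hn. destruct (Nat.eq_dec p (S m)) as [->|Hne]; auto.
  exfalso; apply Hn; exists p; split; auto; lia.
Qed.

Lemma maxb_sep A B C m a b Lm x y : nondeg A B C ->
  (forall y, (a < y < b /\ cut A B C m y) <-> In y Lm) ->
  a < x < b -> a < y < b -> x < y ->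
  has_index A B C x (S m) -> has_index A B C y (S m) -> maxb Lm x <> maxb Lm y.
Proof.
  intros H HL Hx Hy Hxy Ix Iy E.
  destruct (key A B C x y (S m) H Ix Iy Hxy ltac:(lia)) as (z & p & Hz & Hp & Hi).
  assert (Hzl : In z Lm) by (apply HL; split; [lra|]; exists p; split; [lia|auto]).
  destruct (maxb Lm y) as [w|] eqn:Ey.
  - destruct (maxb_some Lm y w Ey) as (_ & _ & W). pose proof (W z Hzl (proj2 Hz)).
    destruct (maxb_some Lm x w E) as (_ & W2 & _). lra.
  - apply (maxb_none Lm y Ey z Hzl). lra.
Qed.

Lemma minab_sep A B C m a b Lm x y : nondeg A B C ->
  (forall y, (a < y < b /\ cut A B C m y) <-> In y Lm) ->
  a < x < b -> a < y < b -> x < y ->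
  has_index A B C x (S m) -> has_index A B C y (S m) -> minab Lm x <> minab Lm y.
Proof.
  intros H HL Hx Hy Hxy Ix Iy E.
  destruct (key A B C x y (S m) H Ix Iy Hxy ltac:(lia)) as (z & p & Hz & Hp & Hi).
  assert (Hzl : In z Lm) by (apply HL; split; [lra|]; exists p; split; [lia|auto]).
  destruct (minab Lm x) as [w|] eqn:Ex.
  - destruct (minab_some Lm x w Ex) as (_ & _ & W). pose proof (W z Hzl (proj1 Hz)).
    destruct (minab_some Lm y w (eq_sym E)) as (_ & W2 & _). lra.
  - apply (minab_none Lm x Ex z Hzl). lra.
Qed.

Lemma level_bound A B C m a b Lm : nondeg A B C ->
  (forall y, (a < y < b /\ cut A B C m y) <-> In y Lm) ->
  forall l, NoDup l -> (forall y, In y l -> a < y < b /\ cut A B C (S m) y) ->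
  (length l <= 2 * length Lm + 1)%nat.
Proof.
  intros H HL l Hnd Hl.
  set (h := fun y => if excluded_middle_informative (cut A B C m y) then (true, Some y) else (false, maxb Lm y)).
  set (T := map (fun z => (true, Some z)) Lm ++ (false, None) :: map (fun z => (false, Some z)) Lm).
  assert (Hlen : length T = (2 * length Lm + 1)%nat).
  { unfold T. rewrite length_app. simpl. rewrite !length_map. lia. }
  rewrite <- Hlen, <- (length_map h l).
  apply NoDup_incl_length.
  - apply NoDup_map_NoDup_ForallPairs; auto. intros x y Hx Hy E.
    destruct (Hl x Hx) as [Jx Cx]. destruct (Hl y Hy) as [Jy Cy].
    unfold h in E. destruct (excluded_middle_informative (cut A B C m x)) as [Mx|Mx];
    destruct (excluded_middle_informative (cut A B C m y)) as [My|My];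
    injection E; intros; try discriminate; try congruence.
    pose proof (exact_of_cut A B C m x Cx Mx). pose proof (exact_of_cut A B C m y Cy My).
    destruct (Rtotal_order x y) as [Lt|[Eq|Gt]]; auto; exfalso.
    + apply (maxb_sep A B C m a b Lm x y); auto.
    + apply (maxb_sep A B C m a b Lm y x); auto.
  - intros c Hc. apply in_map_iff in Hc as (y & <- & Hy). destruct (Hl y Hy) as [Jy Cy].
    unfold h, T. destruct (excluded_middle_informative (cut A B C m y)) as [My|My].
    + apply in_or_app; left. apply in_map_iff. exists y; split; auto. apply HL; auto.
    + apply in_or_app; right. destruct (maxb Lm y) as [w|] eqn:E.
      * right. apply in_map_iff. exists w; split; auto. apply (maxb_some Lm y w E).
      * left; auto.
Qed.

Lemma fin_levels A B C n a b : nondeg A B C -> (forall y, a < y < b -> ~ cut A B C n y) ->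
  forall j, exists L, forall y, (a < y < b /\ cut A B C (n + j) y) <-> In y L.
Proof.
  intros H Hno j. induction j.
  - exists nil. intro y. rewrite Nat.add_0_r. simpl. split; [intros [J Cy]; apply (Hno y J Cy)|tauto].
  - destruct IHj as [Lm HL]. rewrite Nat.add_succ_r.
    apply (bounded_list _ (2 * length Lm + 1)).
    intros l Hnd Hl. apply (level_bound A B C (n + j) a b Lm H HL l Hnd Hl).
Qed.


Lemma finish A B C n c a b x r xp xq L : nondeg A B C ->
  (forall y, a < y < b -> ~ cut A B C n y) -> (n < r <= n + c)%nat ->
  has_index A B C x r -> (forall q', (q' < r)%nat -> ~ has_index A B C x q') -> a < x < b ->
  (forall y, (a < y < b /\ cut A B C (pred r) y) <-> In y L) ->
  maxb L x = Some xp -> minab L x = Some xq ->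
  exists (xp xq xr : R) (p q r : nat),
    (a < xp < b /\ cut A B C (n + c) xp) /\
    (a < xq < b /\ cut A B C (n + c) xq) /\
    (a < xr < b /\ cut A B C (n + c) xr) /\
    good_position A B C xp xq xr p q r.
Proof.
  intros H Hno Hr Ix Hmin Jx HL Ep Eq.
  destruct (maxb_some L x xp Ep) as (Ip & Lp & Wp).
  destruct (minab_some L x xq Eq) as (Iq & Lq & Wq).
  destruct (proj2 (HL xp) Ip) as [Jp (p & Hp & Hip)].
  destruct (proj2 (HL xq) Iq) as [Jq (q & Hq & Hiq)].
  set (m := pred r) in *. assert (Er : r = S m) by (unfold m; lia).
  assert (Gap : forall z, xp < z < xq -> ~ cut A B C m z).
  { intros z Hz Cz. assert (Inz : In z L) by (apply HL; split; [lra|auto]).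
    destruct (Rtotal_order z x) as [Lt|[E|Gt]].
    - pose proof (Wp z Inz Lt); lra.
    - subst z. destruct Cz as (p' & Hp' & Hi'). apply (Hmin p'); auto; lia.
    - pose proof (Wq z Inz Gt); lra. }
  assert (Pn : forall y p', a < y < b -> has_index A B C y p' -> (n < p')%nat).
  { intros y p' Jy Hi. destruct (Nat.le_gt_cases p' n); auto. exfalso. apply (Hno y Jy). exists p'; auto. }
  assert (Hpq : p <> q).
  { intro E. subst q. destruct (key A B C xp xq p H Hip Hiq ltac:(lra) ltac:(pose proof (Pn xp p Jp Hip); lia))
      as (z & p' & Hz & Hp' & Hi'). apply (Gap z); [lra|]. exists p'; split; auto; lia. }
  assert (Fin : forall y, xp < y < xq -> cut A B C r y -> y = x).
  { intros y Hy Cy. rewrite Er in Cy. assert (Ny : ~ cut A B C m y) by (apply Gap; auto).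
    pose proof (exact_of_cut A B C m y Cy Ny) as Iy. rewrite <- Er in Iy.
    destruct (Rtotal_order y x) as [Lt|[E|Gt]]; auto; exfalso.
    - destruct (key A B C y x r H Iy Ix Lt ltac:(lia)) as (z & p' & Hz & Hp' & Hi').
      apply (Gap z); [lra|]. exists p'; split; auto; lia.
    - destruct (key A B C x y r H Ix Iy Gt ltac:(lia)) as (z & p' & Hz & Hp' & Hi').
      apply (Gap z); [lra|]. exists p'; split; auto; lia. }
  assert (Cp : cut A B C (n + c) xp) by (exists p; split; auto; lia).
  assert (Cq : cut A B C (n + c) xq) by (exists q; split; auto; lia).
  assert (Cx : cut A B C (n + c) x) by (exists r; split; auto; lia).
  destruct (Nat.lt_total p q) as [Lpq|[E|Lpq]]; [|lia|].
  - exists xp, xq, x, p, q, r. split; [split; [lra|auto]|]. split; [split; [lra|auto]|]. split; [split; [lra|auto]|].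
    unfold good_position. split; [lia|]. split; [auto|]. split; [auto|]. split; [auto|]. split.
    + left; lra.
    + intros y [Hy|Hy] Cy; [apply Fin; auto|lra].
  - exists xq, xp, x, q, p, r. split; [split; [lra|auto]|]. split; [split; [lra|auto]|]. split; [split; [lra|auto]|].
    unfold good_position. split; [lia|]. split; [auto|]. split; [auto|]. split; [auto|]. split.
    + right; lra.
    + intros y [Hy|Hy] Cy; [lra|apply Fin; auto; lra].
Qed.


Lemma len_T s c : length (flat_map (fun r : nat => (r, true) :: (r, false) :: nil) (seq s c)) = (2 * c)%nat.
Proof. revert s; induction c; intro s; simpl; auto. rewrite IHc. lia. Qed.

Theorem lemma2p1 (A B C : pt) (n c : nat) (a b : R) :
  nondeg A B C -> (1 <= c)%nat ->
  partition_interval A B C n a b ->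
  (exists l : list R, length l = (4 + 2 * c)%nat /\ NoDup l /\
     forall x, In x l -> a < x < b /\ cut A B C (n + c) x) ->
  exists (xp xq xr : R) (p q r : nat),
    (a < xp < b /\ cut A B C (n + c) xp) /\
    (a < xq < b /\ cut A B C (n + c) xq) /\
    (a < xr < b /\ cut A B C (n + c) xr) /\
    good_position A B C xp xq xr p q r.
Proof.
  intros H Hc [Ca [Cb [Hab Hno]]] (l & Hlen & Hnd & Hl).
  set (PL := fun m L => forall y, (a < y < b /\ cut A B C m y) <-> In y L).
  set (Lf := fun m => epsilon (inhabits (@nil R)) (PL m)).
  assert (HLf : forall m, (n <= m)%nat -> PL m (Lf m)).
  { intros m Hm. destruct (fin_levels A B C n a b H Hno (m - n)) as [L HL].
    replace (n + (m - n))%nat with m in HL by lia.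
    apply (epsilon_spec (inhabits nil) (PL m)). exists L; exact HL. }
  set (RK := fun x r => has_index A B C x r /\ forall q, (q < r)%nat -> ~ has_index A B C x q).
  set (rk := fun x => epsilon (inhabits 0%nat) (RK x)).
  assert (Hrk : forall x, In x l -> RK x (rk x) /\ (n < rk x <= n + c)%nat).
  { intros x Hx. destruct (Hl x Hx) as [Jx (p & Hp & Hi)].
    destruct (min_index A B C x p Hi) as (r & Hr & Hr1 & Hr2).
    assert (S0 : RK x (rk x)) by (apply (epsilon_spec (inhabits 0%nat) (RK x)); exists r; split; auto).
    split; auto. destruct S0 as [S1 S2]. split.
    - destruct (Nat.le_gt_cases (rk x) n); auto. exfalso. apply (Hno x Jx). exists (rk x); auto.
    - destruct (Nat.le_gt_cases (rk x) p); [lia|]. exfalso. apply (S2 p); auto. }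
  assert (Good : exists x, In x l /\ exists xp xq, maxb (Lf (pred (rk x))) x = Some xp /\
                                               minab (Lf (pred (rk x))) x = Some xq).
  { apply NNPP; intro Hng.
    set (g := fun x => (rk x, match maxb (Lf (pred (rk x))) x with None => true | Some _ => false end)).
    set (T := flat_map (fun r : nat => (r, true) :: (r, false) :: nil) (seq (S n) c)).
    assert (Hle : (length (map g l) <= length T)%nat).
    { apply NoDup_incl_length.
      - apply NoDup_map_NoDup_ForallPairs; auto. intros x y Hx Hy E. unfold g in E.
        injection E; intros Eb Er.
        destruct (Hrk x Hx) as [[Ix _] Bx]. destruct (Hrk y Hy) as [[Iy _] By].
        destruct (Hl x Hx) as [Jx _]. destruct (Hl y Hy) as [Jy _].
        set (m := pred (rk x)) in *. assert (Erx : rk x = S m) by (unfold m; lia).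
        rewrite <- Er in Eb, Iy. fold m in Eb. rewrite Erx in Ix, Iy.
        assert (HL : PL m (Lf m)) by (apply HLf; lia).
        assert (Bad : forall w, In w l -> rk w = rk x -> maxb (Lf m) w = None \/ minab (Lf m) w = None).
        { intros w Hw Ew. destruct (maxb (Lf m) w) eqn:E1; auto. destruct (minab (Lf m) w) eqn:E2; auto.
          exfalso; apply Hng. exists w. split; auto. exists r, r0. unfold m in E1, E2. rewrite Ew. auto. }
        destruct (Rtotal_order x y) as [Lt|[Eq|Gt]]; auto; exfalso.
        + destruct (maxb (Lf m) x) eqn:Mx; destruct (maxb (Lf m) y) eqn:My; try discriminate.
          * destruct (Bad x Hx eq_refl) as [B1|B1]; [congruence|].
            destruct (Bad y Hy (eq_sym Er)) as [B2|B2]; [congruence|].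
            apply (minab_sep A B C m a b (Lf m) x y); auto; congruence.
          * apply (maxb_sep A B C m a b (Lf m) x y); auto; congruence.
        + destruct (maxb (Lf m) x) eqn:Mx; destruct (maxb (Lf m) y) eqn:My; try discriminate.
          * destruct (Bad x Hx eq_refl) as [B1|B1]; [congruence|].
            destruct (Bad y Hy (eq_sym Er)) as [B2|B2]; [congruence|].
            apply (minab_sep A B C m a b (Lf m) y x); auto; congruence.
          * apply (maxb_sep A B C m a b (Lf m) y x); auto; congruence.
      - intros cd Hcd. apply in_map_iff in Hcd as (x & Ex & Hx). subst cd.
        destruct (Hrk x Hx) as [_ Bx]. unfold T, g. apply in_flat_map. exists (rk x). split.
        + apply in_seq. lia.
        + destruct (maxb (Lf (pred (rk x))) x); simpl; auto. }
    rewrite length_map in Hle. unfold T in Hle. rewrite len_T in Hle. lia. }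
  destruct Good as (x & Hx & xp & xq & Ep & Eq).
  destruct (Hrk x Hx) as [[Ix Mx] Bx]. destruct (Hl x Hx) as [Jx _].
  apply (finish A B C n c a b x (rk x) xp xq (Lf (pred (rk x)))); auto.
  apply HLf; lia.
Qed.
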